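(* Let $\beta>0$, $0\le\alpha\le\beta$, and let $M$ be the set of global maximizers on $[-1,1]^2$ of \[ \Gamma(x):=\tfrac12\Big(\tfrac14\beta x_1^2+\tfrac14\beta x_2^2+\tfrac12\alpha x_1x_2\Big)-\tfrac12 I(x_1)-\tfrac12 I(x_2). \] Then for every $\varepsilon>0$ there is $c>0$ such that $\mu_{N,\alpha,\beta,S}\big(m\notin B_\varepsilon(M)\big)\le e^{-cN}$ for all sufficiently large $N$, where $m=(m_1,m_2)$ and $B_\varepsilon(M)$ is the union of open Euclidean balls of radius $\varepsilon$ around the points of $M$. Moreover: (i) if $\alpha+\beta\le 2$, then $(0,0)$ is the unique solution in $(-1,1)^2$ of the critical point equations $\frac12\beta x_1+\frac12\alpha x_2=\operatorname{artanh}(x_1)$, $\frac12\beta x_2+\frac12\alpha x_1=\operatorname{artanh}(x_2)$ (for $\alpha>0$), and $M=\{(0,0)\}$; in particular the law of $m$ converges weakly to $\delta_{(0,0)}$; (ii) if $\alpha+\beta>2$ and $\alpha>0$, then $M=\{(m^*,m^* ),(-m^*,-m^* )\}$, where $m^*>0$ is the positive solution of $\tanh\big(\frac{\alpha+\beta}{2}z\big)=z$.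
   Context: Block spin Ising model: $N$ is even, $S\subset\{1,\dots,N\}$ with $|S|=N/2$. Write $i\sim j$ if $i,j$ both lie in $S$ or both in $S^c$, $i\not\sim j$ otherwise. Hamiltonian $H_{N,\alpha,\beta,S}(\sigma)=-\frac{\beta}{2N}\sum_{i\sim j}\sigma_i\sigma_j-\frac{\alpha}{2N}\sum_{i\not\sim j}\sigma_i\sigma_j$ on $\{-1,+1\}^N$, Gibbs measure $\mu_{N,\alpha,\beta,S}(\sigma)\propto e^{-H_{N,\alpha,\beta,S}(\sigma)}$. Block magnetizations $m_1=\frac2N\sum_{i\in S}\sigma_i$, $m_2=\frac2N\sum_{i\notin S}\sigma_i$. $I(z):=\frac12(1+z)\log(1+z)+\frac12(1-z)\log(1-z)$ for $|z|\le1$. *)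

(* Defs.v *)
From Stdlib Require Import Reals Lra Lia List ClassicalEpsilon.
Import ListNotations.
Open Scope R_scope.

Definition sumR {A : Type} (l : list A) (f : A -> R) : R :=
  fold_right (fun a acc => f a + acc) 0 l.

(* the configuration space {-1,+1}^N, spins encoded as booleans:
   sigma_i = spin (nth i sigma false), indices i = 0..N-1 *)
Fixpoint cube (n : nat) : list (list bool) :=
  match n with
  | O => [[]]
  | S k => map (cons true) (cube k) ++ map (cons false) (cube k)
  end.

Definition spin (b : bool) : R := if b then 1 else -1.
Definition sig (sigma : list bool) (i : nat) : R := spin (nth i sigma false).

(* the block S ⊆ {0..N-1} is given by its indicator S : nat -> bool;
   |S| = N/2 *)
Definition card_block (N : nat) (S : nat -> bool) : nat :=
  length (filter S (seq 0 N)).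
Definition valid_block (N : nat) (S : nat -> bool) : Prop :=
  Nat.Even N /\ (2 * card_block N S)%nat = N.

Definition same_block (S : nat -> bool) (i j : nat) : bool := Bool.eqb (S i) (S j).

(* Hamiltonian; sums over all ordered pairs (i,j), i,j in {0..N-1} *)
Definition Ham (N : nat) (alpha beta : R) (S : nat -> bool) (sigma : list bool) : R :=
  - (beta / (2 * INR N)) *
      sumR (seq 0 N) (fun i => sumR (seq 0 N) (fun j =>
         if same_block S i j then sig sigma i * sig sigma j else 0))
  - (alpha / (2 * INR N)) *
      sumR (seq 0 N) (fun i => sumR (seq 0 N) (fun j =>
         if same_block S i j then 0 else sig sigma i * sig sigma j)).

Definition weight N alpha beta S sigma : R := exp (- Ham N alpha beta S sigma).
Definition partition_fn N alpha beta S : R :=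
  sumR (cube N) (weight N alpha beta S).

Definition gibbs_prob N alpha beta S (A : list bool -> Prop) : R :=
  sumR (cube N) (fun sigma =>
     match excluded_middle_informative (A sigma) with
     | left _ => weight N alpha beta S sigma
     | right _ => 0 end) / partition_fn N alpha beta S.

Definition gibbs_exp N alpha beta S (F : list bool -> R) : R :=
  sumR (cube N) (fun sigma => F sigma * weight N alpha beta S sigma)
    / partition_fn N alpha beta S.

Definition mag1 (N : nat) (S : nat -> bool) (sigma : list bool) : R :=
  (2 / INR N) * sumR (seq 0 N) (fun i => if S i then sig sigma i else 0).
Definition mag2 (N : nat) (S : nat -> bool) (sigma : list bool) : R :=
  (2 / INR N) * sumR (seq 0 N) (fun i => if S i then 0 else sig sigma i).

(* x log x with the convention 0 log 0 = 0 *)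
Definition xlogx (x : R) : R := if Rle_dec x 0 then 0 else x * ln x.
Definition I_rate (z : R) : R := / 2 * xlogx (1 + z) + / 2 * xlogx (1 - z).

Definition Gamma (alpha beta x1 x2 : R) : R :=
  / 2 * (/ 4 * beta * x1 ^ 2 + / 4 * beta * x2 ^ 2 + / 2 * alpha * x1 * x2)
  - / 2 * I_rate x1 - / 2 * I_rate x2.

Definition in_square (x1 x2 : R) : Prop := -1 <= x1 <= 1 /\ -1 <= x2 <= 1.

Definition is_global_max (alpha beta x1 x2 : R) : Prop :=
  in_square x1 x2 /\
  forall y1 y2, in_square y1 y2 -> Gamma alpha beta y1 y2 <= Gamma alpha beta x1 x2.

Definition in_nbhd_M (alpha beta eps y1 y2 : R) : Prop :=
  exists x1 x2, is_global_max alpha beta x1 x2 /\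
    sqrt ((y1 - x1) ^ 2 + (y2 - x2) ^ 2) < eps.

Definition artanh (x : R) : R := / 2 * ln ((1 + x) / (1 - x)).

Definition continuous2 (f : R -> R -> R) : Prop :=
  forall x1 x2 e, 0 < e -> exists d, 0 < d /\
    forall y1 y2, Rabs (y1 - x1) < d -> Rabs (y2 - x2) < d ->
      Rabs (f y1 y2 - f x1 x2) < e.
Definition bounded2 (f : R -> R -> R) : Prop :=
  exists B, forall x1 x2, Rabs (f x1 x2) <= B.

(* Main.v *)
Require Import Defs.
From Stdlib Require Import Reals List.
From Stdlib Require Import Lra Lia ClassicalEpsilon Classical.
From Coquelicot Require Import Coquelicot.
Import ListNotations.
Open Scope R_scope.

Lemma sumR_nil {A} (f : A -> R) : sumR [] f = 0.
Proof. reflexivity. Qed.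
Lemma sumR_cons {A} (a : A) l f : sumR (a :: l) f = f a + sumR l f.
Proof. reflexivity. Qed.
Lemma sumR_app {A} (l1 l2 : list A) f : sumR (l1 ++ l2) f = sumR l1 f + sumR l2 f.
Proof. induction l1; simpl; [ring| rewrite IHl1; ring]. Qed.
Lemma sumR_map {A B} (g : A -> B) l f : sumR (map g l) f = sumR l (fun x => f (g x)).
Proof. induction l; simpl; [reflexivity| rewrite IHl; ring]. Qed.
Lemma sumR_ext {A} (l : list A) f g : (forall x, In x l -> f x = g x) -> sumR l f = sumR l g.
Proof. induction l; simpl; intros H; [reflexivity|]. rewrite H by auto. rewrite IHl by auto. ring. Qed.
Lemma sumR_plus {A} (l : list A) f g : sumR l (fun x => f x + g x) = sumR l f + sumR l g.
Proof. induction l; simpl; [ring| rewrite IHl; ring]. Qed.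
Lemma sumR_scal {A} (l : list A) c f : sumR l (fun x => c * f x) = c * sumR l f.
Proof. induction l; simpl; [ring| rewrite IHl; ring]. Qed.
Lemma sumR_zero {A} (l : list A) : sumR l (fun _ => 0) = 0.
Proof. induction l; simpl; [ring| rewrite IHl; ring]. Qed.
Lemma sumR_le {A} (l : list A) f g : (forall x, In x l -> f x <= g x) -> sumR l f <= sumR l g.
Proof. induction l; simpl; intros H; [lra|]. assert (f a <= g a) by auto.
  assert (sumR l f <= sumR l g) by auto. lra. Qed.
Lemma sumR_nonneg {A} (l : list A) f : (forall x, In x l -> 0 <= f x) -> 0 <= sumR l f.
Proof. intros H. rewrite <- (sumR_zero l). apply sumR_le; auto. Qed.
Lemma sumR_ge_elem {A} (l : list A) f a : (forall x, In x l -> 0 <= f x) -> In a l -> f a <= sumR l f.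
Proof. induction l; simpl; intros H Ha; [contradiction|]. destruct Ha as [<-|Ha].
  - assert (0 <= sumR l f) by (apply sumR_nonneg; auto). lra.
  - assert (0 <= f a0) by auto. assert (f a <= sumR l f) by auto. lra. Qed.
Lemma sumR_le_const {A} (l : list A) f c : (forall x, In x l -> f x <= c) -> sumR l f <= INR (length l) * c.
Proof. induction l; intros H; [simpl; lra|].
  change (sumR (a::l) f) with (f a + sumR l f). change (length (a::l)) with (S (length l)). rewrite S_INR.
  assert (f a <= c) by (apply H; left; auto). assert (sumR l f <= INR (length l) * c) by (apply IHl; intros; apply H; right; auto). lra. Qed.
Lemma sumR_abs {A} (l : list A) f : Rabs (sumR l f) <= sumR l (fun x => Rabs (f x)).
Proof. induction l; simpl. rewrite Rabs_R0; lra.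
  eapply Rle_trans; [apply Rabs_triang|]. lra. Qed.
Lemma sumR_pos {A} (l : list A) f a : (forall x, In x l -> 0 <= f x) -> In a l -> 0 < f a -> 0 < sumR l f.
Proof. intros. eapply Rlt_le_trans; [eassumption|]. apply sumR_ge_elem; auto. Qed.

Lemma seq0_S n : seq 0 (S n) = 0%nat :: map S (seq 0 n).
Proof. simpl. rewrite seq_shift. reflexivity. Qed.
Lemma sumR_seq_S_l n (f : nat -> R) : sumR (seq 0 (S n)) f = f 0%nat + sumR (seq 0 n) (fun i => f (S i)).
Proof. rewrite seq0_S, sumR_cons, sumR_map. reflexivity. Qed.
Lemma sumR_seq_S_r n (f : nat -> R) : sumR (seq 0 (S n)) f = sumR (seq 0 n) f + f n.
Proof. rewrite seq_S, sumR_app. simpl. ring. Qed.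
Lemma in_seq0 i n : In i (seq 0 n) <-> (i < n)%nat.
Proof. rewrite in_seq. lia. Qed.

Fixpoint binom (n k : nat) : nat :=
  match n, k with
  | _, O => 1%nat
  | O, S _ => 0%nat
  | S n', S k' => (binom n' k' + binom n' (S k'))%nat
  end.

Lemma binom_0 n : binom n 0 = 1%nat. Proof. destruct n; reflexivity. Qed.
Lemma binom_big n k : (n < k)%nat -> binom n k = 0%nat.
Proof. revert k; induction n; intros k Hk; destruct k; simpl; try lia; auto.
  rewrite !IHn by lia. reflexivity. Qed.
Lemma binom_SS n k : binom (S n) (S k) = (binom n k + binom n (S k))%nat.
Proof. reflexivity. Qed.

Lemma binom_ratio n j : ((S j) * binom n (S j) = (n - j) * binom n j)%nat.
Proof.
  revert j; induction n; intros j.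
  - destruct j; simpl; lia.
  - destruct j.
    + simpl binom. assert (H1: forall m, binom m 1 = m).
      { induction m; simpl; [reflexivity| rewrite binom_0, IHm; lia]. }
      simpl. rewrite H1, binom_0. lia.
    + rewrite binom_SS. rewrite binom_SS.
      specialize (IHn (S j)) as H2. specialize (IHn j) as H3.
      destruct (Nat.lt_ge_cases j n).
      * replace (S n - S j)%nat with (n - j)%nat in * by lia.
        destruct (n - S j)%nat eqn:Ed.
        -- replace (n - j)%nat with 1%nat in * by lia. nia.
        -- replace (n - j)%nat with (S (S n0)) in * by lia. nia.
      * rewrite (binom_big n (S (S j))) by lia. rewrite (binom_big n (S j)) by lia.
        replace (S n - S j)%nat with (n - j)%nat by lia. nia.
Qed.

Definition Rb n k := INR (binom n k).
Lemma Rb_nonneg n k : 0 <= Rb n k. Proof. apply pos_INR. Qed.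

Lemma pascal_sum p (h : nat -> R) :
  sumR (seq 0 (S (S p))) (fun a => Rb (S p) a * h a)
  = sumR (seq 0 (S p)) (fun a => Rb p a * (h (S a) + h a)).
Proof.
  rewrite sumR_seq_S_l. unfold Rb at 1. rewrite binom_0.
  rewrite (sumR_ext _ _ (fun a => Rb p a * h (S a) + Rb p (S a) * h (S a))).
  2:{ intros x _. unfold Rb. rewrite binom_SS, plus_INR. ring. }
  rewrite sumR_plus.
  rewrite (sumR_ext _ (fun a => Rb p a * (h (S a) + h a)) (fun a => Rb p a * h (S a) + Rb p a * h a)) by (intros; ring).
  rewrite sumR_plus.
  assert (E: sumR (seq 0 (S p)) (fun a => Rb p (S a) * h (S a)) + Rb p 0 * h 0%nat
           = sumR (seq 0 (S p)) (fun a => Rb p a * h a)).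
  { rewrite (sumR_seq_S_l p (fun a => Rb p a * h a)).
    rewrite (sumR_seq_S_r p (fun a => Rb p (S a) * h (S a))).
    unfold Rb at 2. rewrite (binom_big p (S p)) by lia. simpl INR. ring. }
  simpl INR. unfold Rb at 2 in E. rewrite binom_0 in E. simpl INR in E. lra.
Qed.

Lemma binomial_thm x y n :
  (x + y) ^ n = sumR (seq 0 (S n)) (fun j => Rb n j * x ^ j * y ^ (n - j)).
Proof.
  induction n.
  - simpl. unfold Rb. simpl. ring.
  - rewrite (sumR_ext _ _ (fun j => Rb (S n) j * (x ^ j * y ^ (S n - j)))) by (intros; ring).
    rewrite (pascal_sum n (fun j => x ^ j * y ^ (S n - j))).
    change ((x + y) ^ S n) with ((x + y) * (x + y) ^ n). rewrite IHn.
    rewrite <- sumR_scal. apply sumR_ext. intros j Hj. apply in_seq0 in Hj.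
    replace (S n - S j)%nat with (n - j)%nat by lia.
    replace (S n - j)%nat with (S (n - j)) by lia. simpl. ring.
Qed.

Definition T n k j := Rb n j * INR k ^ j * INR (n - k) ^ (n - j).
Lemma T_nonneg n k j : (k <= n)%nat -> 0 <= T n k j.
Proof. intros. unfold T. apply Rmult_le_pos; [apply Rmult_le_pos|]; try apply pow_le; try apply pos_INR; apply Rb_nonneg. Qed.

Lemma T_sum n k : (k <= n)%nat -> sumR (seq 0 (S n)) (T n k) = INR n ^ n.
Proof. intros. unfold T. rewrite <- binomial_thm. rewrite <- plus_INR. f_equal. f_equal. lia. Qed.

Lemma T_ratio n k j : (j < n)%nat ->
  T n k (S j) * INR (S j) * INR (n - k) = T n k j * INR (n - j) * INR k.
Proof.
  intros Hj. unfold T.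
  assert (H := binom_ratio n j). apply (f_equal INR) in H. rewrite !mult_INR in H.
  unfold Rb.
  change (INR k ^ S j) with (INR k * INR k ^ j).
  replace (INR (n - k) ^ (n - j)) with (INR (n - k) * INR (n - k) ^ (n - S j))
    by (replace (n - j)%nat with (S (n - S j)) by lia; reflexivity).
  transitivity ((INR (S j) * INR (binom n (S j))) * INR k * INR k ^ j * INR (n - k) ^ (n - S j) * INR (n - k)); [ring|].
  rewrite H. ring.
Qed.

Lemma T_up n k j : (k <= n)%nat -> (j < k)%nat -> T n k j <= T n k (S j).
Proof.
  intros Hk Hj. destruct (Nat.eq_dec k n) as [->|Hkn].
  - unfold T at 1. replace (n - n)%nat with 0%nat by lia. simpl INR.
    replace (n - j)%nat with (S (n - S j)) by lia. simpl. rewrite Rmult_0_l, Rmult_0_r.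
    apply T_nonneg; lia.
  - assert (R := T_ratio n k j ltac:(lia)).
    assert (Hc : 0 < INR (S j) * INR (n - k)) by (apply Rmult_lt_0_compat; apply lt_0_INR; lia).
    assert (Hd : INR (S j) * INR (n - k) <= INR (n - j) * INR k).
    { rewrite <- !mult_INR. apply le_INR. nia. }
    assert (H0 := T_nonneg n k j Hk). assert (H1 := T_nonneg n k (S j) Hk). nra.
Qed.

Lemma T_down n k j : (k <= j)%nat -> (j < n)%nat -> T n k (S j) <= T n k j.
Proof.
  intros Hk Hj.
  assert (R := T_ratio n k j Hj).
  assert (Hc : 0 < INR (S j) * INR (n - k)) by (apply Rmult_lt_0_compat; apply lt_0_INR; lia).
  assert (Hd : INR (n - j) * INR k <= INR (S j) * INR (n - k)).
  { rewrite <- !mult_INR. apply le_INR. nia. }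
  assert (H0 := T_nonneg n k j ltac:(lia)). assert (H1 := T_nonneg n k (S j) ltac:(lia)). nra.
Qed.

Lemma T_max n k j : (k <= n)%nat -> (j <= n)%nat -> T n k j <= T n k k.
Proof.
  intros Hk Hj. destruct (Nat.le_ge_cases j k).
  - assert (forall d, (d + j = k)%nat -> T n k j <= T n k k) as G.
    { intros d; revert j Hj H; induction d; intros j Hj H E.
      + simpl in E. subst. lra.
      + eapply Rle_trans; [apply T_up; lia|]. apply IHd; lia. }
    apply (G (k - j)%nat). lia.
  - assert (forall d, (k + d = j)%nat -> (j <= n)%nat -> T n k j <= T n k k) as G.
    { intros d; revert j Hj H; induction d; intros j Hj H E Hn.
      + rewrite Nat.add_0_r in E. subst. lra.
      + destruct j; [lia|]. eapply Rle_trans; [apply T_down; lia|]. apply IHd; lia. }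
    apply (G (j - k)%nat); lia.
Qed.

Lemma T_bounds n k : (k <= n)%nat ->
  T n k k <= INR n ^ n /\ INR n ^ n <= INR (S n) * T n k k.
Proof.
  intros Hk. rewrite <- (T_sum n k Hk). split.
  - apply sumR_ge_elem. intros; apply T_nonneg; auto. apply in_seq0; lia.
  - rewrite <- (length_seq (S n) 0) at 2. apply sumR_le_const.
    intros j Hj. apply in_seq0 in Hj. apply T_max; lia.
Qed.

Definition blkA (S : nat -> bool) N sigma := sumR (seq 0 N) (fun i => if S i then sig sigma i else 0).
Definition blkB (S : nat -> bool) N sigma := sumR (seq 0 N) (fun i => if S i then 0 else sig sigma i).
Definition cardB N (S : nat -> bool) := length (filter (fun i => negb (S i)) (seq 0 N)).

Lemma filter_map_S (f : nat -> bool) l : length (filter f (map S l)) = length (filter (fun i => f (S i)) l).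
Proof. induction l; simpl; auto. destruct (f (S a)); simpl; auto. Qed.

Lemma cardA_S N S : card_block (Datatypes.S N) S =
  ((if S 0%nat then 1 else 0) + card_block N (fun i => S (Datatypes.S i)))%nat.
Proof. unfold card_block. rewrite seq0_S. simpl. destruct (S 0%nat); simpl; rewrite filter_map_S; auto. Qed.
Lemma cardB_S N S : cardB (Datatypes.S N) S =
  ((if S 0%nat then 0 else 1) + cardB N (fun i => S (Datatypes.S i)))%nat.
Proof. unfold cardB. rewrite seq0_S. simpl. destruct (S 0%nat); simpl; rewrite filter_map_S; auto. Qed.
Lemma card_sum N S : (card_block N S + cardB N S)%nat = N.
Proof. revert S; induction N; intros S; [reflexivity|].
  rewrite cardA_S, cardB_S. specialize (IHN (fun i => S (Datatypes.S i))). destruct (S 0%nat); lia. Qed.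

Lemma blkA_S S N b tau : blkA S (Datatypes.S N) (b :: tau) =
  (if S 0%nat then spin b else 0) + blkA (fun i => S (Datatypes.S i)) N tau.
Proof. unfold blkA. rewrite sumR_seq_S_l. reflexivity. Qed.
Lemma blkB_S S N b tau : blkB S (Datatypes.S N) (b :: tau) =
  (if S 0%nat then 0 else spin b) + blkB (fun i => S (Datatypes.S i)) N tau.
Proof. unfold blkB. rewrite sumR_seq_S_l. reflexivity. Qed.

Definition cnt p q (g : R -> R -> R) :=
  sumR (seq 0 (Datatypes.S p)) (fun a => Rb p a *
    sumR (seq 0 (Datatypes.S q)) (fun b => Rb q b * g (2 * INR a - INR p) (2 * INR b - INR q))).

Lemma cnt_plus p q g1 g2 : cnt p q (fun x y => g1 x y + g2 x y) = cnt p q g1 + cnt p q g2.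
Proof. unfold cnt. rewrite <- sumR_plus. apply sumR_ext; intros.
  rewrite <- Rmult_plus_distr_l, <- sumR_plus. f_equal. apply sumR_ext; intros. ring. Qed.

Lemma counting N S (g : R -> R -> R) :
  sumR (cube N) (fun sigma => g (blkA S N sigma) (blkB S N sigma))
  = cnt (card_block N S) (cardB N S) g.
Proof.
  revert S g; induction N; intros S g.
  - simpl. unfold cnt, card_block, cardB, blkA, blkB, Rb. simpl. replace (2*0-0) with 0 by ring. ring.
  - change (cube (Datatypes.S N)) with (map (cons true) (cube N) ++ map (cons false) (cube N)).
    rewrite sumR_app, !sumR_map.
    rewrite (sumR_ext _ (fun x => g (blkA S (Datatypes.S N) (true :: x)) (blkB S (Datatypes.S N) (true :: x)))
       (fun x => g ((if S 0%nat then 1 else 0) + blkA (fun i => S (Datatypes.S i)) N x)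
                   ((if S 0%nat then 0 else 1) + blkB (fun i => S (Datatypes.S i)) N x)))
      by (intros; rewrite blkA_S, blkB_S; reflexivity).
    rewrite (sumR_ext _ (fun x => g (blkA S (Datatypes.S N) (false :: x)) (blkB S (Datatypes.S N) (false :: x)))
       (fun x => g ((if S 0%nat then -1 else 0) + blkA (fun i => S (Datatypes.S i)) N x)
                   ((if S 0%nat then 0 else -1) + blkB (fun i => S (Datatypes.S i)) N x)))
      by (intros; rewrite blkA_S, blkB_S; reflexivity).
    rewrite (IHN _ (fun x y => g ((if S 0%nat then 1 else 0) + x) ((if S 0%nat then 0 else 1) + y))).
    rewrite (IHN _ (fun x y => g ((if S 0%nat then -1 else 0) + x) ((if S 0%nat then 0 else -1) + y))).
    rewrite cardA_S, cardB_S.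
    set (p := card_block N (fun i => S (Datatypes.S i))).
    set (q := cardB N (fun i => S (Datatypes.S i))).
    destruct (S 0%nat); simpl Nat.add.
    + unfold cnt. rewrite pascal_sum. rewrite <- sumR_plus. apply sumR_ext. intros a _.
      rewrite <- Rmult_plus_distr_l. f_equal. f_equal; apply sumR_ext; intros b _;
        f_equal; f_equal; rewrite ?S_INR; ring.
    + unfold cnt. rewrite <- sumR_plus. apply sumR_ext. intros a _.
      rewrite <- Rmult_plus_distr_l. f_equal. rewrite pascal_sum. rewrite <- sumR_plus.
      apply sumR_ext; intros b _. rewrite Rmult_plus_distr_l. f_equal; f_equal; f_equal; rewrite ?S_INR; ring.
Qed.

Lemma inner_same S N sigma i :
  sumR (seq 0 N) (fun j => if same_block S i j then sig sigma i * sig sigma j else 0)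
  = sig sigma i * (if S i then blkA S N sigma else blkB S N sigma).
Proof.
  unfold blkA, blkB, same_block. destruct (S i); rewrite <- sumR_scal; apply sumR_ext; intros j _;
  destruct (S j); simpl; ring.
Qed.
Lemma inner_diff S N sigma i :
  sumR (seq 0 N) (fun j => if same_block S i j then 0 else sig sigma i * sig sigma j)
  = sig sigma i * (if S i then blkB S N sigma else blkA S N sigma).
Proof.
  unfold blkA, blkB, same_block. destruct (S i); rewrite <- sumR_scal; apply sumR_ext; intros j _;
  destruct (S j); simpl; ring.
Qed.

Lemma Ham_eq N alpha beta S sigma :
  Ham N alpha beta S sigma =
  - (beta / (2 * INR N)) * (blkA S N sigma ^ 2 + blkB S N sigma ^ 2)
  - (alpha / (2 * INR N)) * (2 * blkA S N sigma * blkB S N sigma).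
Proof.
  unfold Ham.
  rewrite (sumR_ext _ _ _ (fun i _ => inner_same S N sigma i)).
  rewrite (sumR_ext _ _ _ (fun i _ => inner_diff S N sigma i)).
  set (A := blkA S N sigma). set (B := blkB S N sigma).
  assert (E1 : sumR (seq 0 N) (fun i => sig sigma i * (if S i then A else B)) = A ^ 2 + B ^ 2).
  { rewrite (sumR_ext _ _ (fun i => A * (if S i then sig sigma i else 0) + B * (if S i then 0 else sig sigma i)))
      by (intros i _; destruct (S i); ring).
    rewrite sumR_plus, !sumR_scal. unfold A, B, blkA, blkB. ring. }
  assert (E2 : sumR (seq 0 N) (fun i => sig sigma i * (if S i then B else A)) = 2 * A * B).
  { rewrite (sumR_ext _ _ (fun i => B * (if S i then sig sigma i else 0) + A * (if S i then 0 else sig sigma i)))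
      by (intros i _; destruct (S i); ring).
    rewrite sumR_plus, !sumR_scal. unfold A, B, blkA, blkB. ring. }
  rewrite E1, E2. reflexivity.
Qed.

Lemma mag1_eq N S sigma : mag1 N S sigma = 2 / INR N * blkA S N sigma.
Proof. reflexivity. Qed.
Lemma mag2_eq N S sigma : mag2 N S sigma = 2 / INR N * blkB S N sigma.
Proof. reflexivity. Qed.


Lemma strict_incr (f df : R -> R) a b : a < b ->
  (forall x, a <= x <= b -> continuity_pt f x) ->
  (forall x, a < x < b -> derivable_pt_lim f x (df x)) ->
  (forall x, a < x < b -> 0 < df x) -> f a < f b.
Proof.
  intros Hab Hc Hd Hp.
  pose (pr1 := fun c (P : a < c < b) => exist (fun l => derivable_pt_lim f c l) (df c) (Hd c P)).
  pose (pr2 := fun c (P : a < c < b) => derivable_pt_id c).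
  destruct (MVT f id a b pr1 pr2 Hab Hc (fun c _ => derivable_continuous_pt _ _ (derivable_pt_id c)))
    as [c [P E]].
  unfold pr1, pr2 in E. simpl in E. rewrite derive_pt_id in E. unfold id in E.
  assert (0 < df c) by (apply Hp; auto). nra.
Qed.

Lemma xlogx_pos y : 0 < y -> xlogx y = y * ln y.
Proof. intros. unfold xlogx. destruct (Rle_dec y 0); [lra|reflexivity]. Qed.
Lemma xlogx_npos y : y <= 0 -> xlogx y = 0.
Proof. intros. unfold xlogx. destruct (Rle_dec y 0); [reflexivity|lra]. Qed.

Lemma ln_le_sub1 y : 0 < y -> ln y <= y - 1.
Proof. intros Hy. destruct (Req_dec (ln y) 0) as [E|E]. 
  - rewrite E. assert (y = 1). { rewrite <- (exp_ln y Hy), E. apply exp_0. } lra.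
  - assert (H := exp_ineq1 _ E). rewrite exp_ln in H; lra. Qed.

Lemma xlogx_small x : 0 < x <= 1 -> Rabs (xlogx x) <= 2 * sqrt x.
Proof.
  intros Hx. rewrite xlogx_pos by lra.
  assert (Hs : 0 < sqrt x) by (apply sqrt_lt_R0; lra).
  assert (Hss := sqrt_sqrt x ltac:(lra)).
  assert (Hl0 : ln x <= 0). { rewrite <- ln_1. apply ln_le; lra. }
  assert (Hl1 : ln x = 2 * ln (sqrt x)). { rewrite <- Hss at 1. rewrite ln_mult by lra. ring. }
  assert (Hl2 : ln (/ sqrt x) <= / sqrt x - 1) by (apply ln_le_sub1; apply Rinv_0_lt_compat; lra).
  rewrite ln_Rinv in Hl2 by lra.
  assert (x * / sqrt x = sqrt x). { rewrite <- Hss at 1. field. lra. }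
  rewrite Rabs_left1 by nra. nra.
Qed.

Lemma xlogx_cont t : continuity_pt xlogx t.
Proof.
  destruct (Rlt_le_dec 0 t) as [Ht|Ht].
  - apply continuity_pt_filterlim.
    apply (continuous_ext_loc _ (fun y => y * ln y)).
    + exists (mkposreal t Ht). intros y Hy. simpl in Hy. unfold ball in Hy; simpl in Hy.
      unfold AbsRing_ball, abs, minus, plus, opp in Hy; simpl in Hy.
      symmetry. apply xlogx_pos. apply Rabs_def2 in Hy. lra.
    + apply (@ex_derive_continuous R_AbsRing R_NormedModule). auto_derive. lra.
  - destruct (Rle_lt_or_eq_dec _ _ Ht) as [Ht'|Ht'].
    + apply continuity_pt_filterlim.
      apply (continuous_ext_loc _ (fun _ => 0)).
      * assert (Hp : 0 < - t) by lra. exists (mkposreal _ Hp). intros y Hy. simpl in Hy. unfold ball in Hy; simpl in Hy.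
        unfold AbsRing_ball, abs, minus, plus, opp in Hy; simpl in Hy.
        symmetry. apply xlogx_npos. apply Rabs_def2 in Hy. lra.
      * apply continuous_const.
    + subst t. unfold continuity_pt, continue_in, limit1_in, limit_in. simpl. unfold R_dist.
      intros e He. exists (Rmin 1 (e * e / 4)). split.
      { apply Rmin_pos; nra. }
      intros x [_ Hx]. rewrite Rminus_0_r in Hx. rewrite (xlogx_npos 0) by lra. rewrite Rminus_0_r.
      assert (Hm1 := Rmin_l 1 (e*e/4)). assert (Hm2 := Rmin_r 1 (e*e/4)).
      apply Rabs_def2 in Hx.
      destruct (Rle_dec x 0) as [Hx0|Hx0].
      * rewrite xlogx_npos by lra. rewrite Rabs_R0. lra.
      * eapply Rle_lt_trans; [apply xlogx_small; lra|].
        assert (Hs := sqrt_sqrt x ltac:(lra)). assert (0 <= sqrt x) by apply sqrt_pos. nra.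
Qed.

Lemma xlogx_c t : continuous xlogx t.
Proof. apply continuity_pt_filterlim. apply xlogx_cont. Qed.

Lemma I_cont z : continuous I_rate z.
Proof.
  unfold I_rate.
  apply (continuous_plus (fun z => / 2 * xlogx (1 + z)) (fun z => / 2 * xlogx (1 - z))).
  - apply (continuous_mult (fun _ => / 2) (fun z => xlogx (1 + z))). apply continuous_const.
    apply (continuous_comp (fun z => 1 + z) xlogx). 
    apply (continuous_plus (fun _ => 1) (fun z => z)); [apply continuous_const|apply continuous_id].
    apply xlogx_c.
  - apply (continuous_mult (fun _ => / 2) (fun z => xlogx (1 - z))). apply continuous_const.
    apply (continuous_comp (fun z => 1 - z) xlogx).
    apply (continuous_minus (fun _ => 1) (fun z => z)); [apply continuous_const|apply continuous_id].
    apply xlogx_c.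
Qed.

Definition Gf (K x : R) := K / 2 * x ^ 2 - I_rate x.

Lemma Gf_cont K x : continuity_pt (Gf K) x.
Proof.
  apply continuity_pt_filterlim. unfold Gf.
  apply (continuous_minus (fun x => K / 2 * x ^ 2) I_rate); [|apply I_cont].
  apply (@ex_derive_continuous R_AbsRing R_NormedModule). auto_derive. auto.
Qed.

Lemma I_even z : I_rate (- z) = I_rate z.
Proof. unfold I_rate. replace (1 + - z) with (1 - z) by ring. replace (1 - - z) with (1 + z) by ring. ring. Qed.
Lemma Gf_even K z : Gf K (- z) = Gf K z.
Proof. unfold Gf. rewrite I_even. ring. Qed.
Lemma I_0 : I_rate 0 = 0.
Proof. unfold I_rate. rewrite Rplus_0_r, Rminus_0_r, xlogx_pos, ln_1 by lra. ring. Qed.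
Lemma Gf_0 K : Gf K 0 = 0.
Proof. unfold Gf. rewrite I_0. ring. Qed.

Lemma loc_interval (x : R) (P : R -> Prop) : -1 < x < 1 ->
  (forall y, -1 < y < 1 -> P y) -> locally x P.
Proof.
  intros Hx HP. assert (Hp : 0 < Rmin (1 - x) (1 + x)) by (apply Rmin_pos; lra).
  exists (mkposreal _ Hp). intros y Hy. simpl in Hy. unfold ball in Hy; simpl in Hy.
  unfold AbsRing_ball, abs, minus, plus, opp in Hy; simpl in Hy.
  apply Rabs_def2 in Hy. assert (H1 := Rmin_l (1-x) (1+x)). assert (H2 := Rmin_r (1-x) (1+x)).
  apply HP. lra.
Qed.

Lemma artanh_split x : -1 < x < 1 -> artanh x = / 2 * (ln (1 + x) - ln (1 - x)).
Proof. intros. unfold artanh, Rdiv. rewrite ln_mult, ln_Rinv by (try apply Rinv_0_lt_compat; lra). ring. Qed.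

Lemma I_deriv x : -1 < x < 1 -> derivable_pt_lim I_rate x (artanh x).
Proof.
  intros Hx. apply is_derive_Reals.
  apply (is_derive_ext_loc (fun y => / 2 * ((1 + y) * ln (1 + y)) + / 2 * ((1 - y) * ln (1 - y)))).
  { apply loc_interval; auto. intros y Hy. unfold I_rate. rewrite !xlogx_pos by lra. reflexivity. }
  auto_derive. lra. replace (1 + - x) with (1 - x) by ring. rewrite artanh_split by lra. field. split; lra.
Qed.

Lemma artanh_deriv x : -1 < x < 1 -> derivable_pt_lim artanh x (/ (1 - x ^ 2)).
Proof.
  intros Hx. apply is_derive_Reals.
  apply (is_derive_ext_loc (fun y => / 2 * (ln (1 + y) - ln (1 - y)))).
  { apply loc_interval; auto. intros y Hy. rewrite artanh_split by lra. reflexivity. }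
  auto_derive. lra. field. split; [|split]; try lra. nra.
Qed.

Lemma artanh_cont x : -1 < x < 1 -> continuity_pt artanh x.
Proof. intros Hx. apply derivable_continuous_pt. exists (/ (1 - x ^ 2)). apply artanh_deriv; auto. Qed.

Lemma artanh_0 : artanh 0 = 0.
Proof. unfold artanh. replace ((1 + 0) / (1 - 0)) with 1 by field. rewrite ln_1. ring. Qed.
Lemma artanh_odd x : -1 < x < 1 -> artanh (- x) = - artanh x.
Proof. intros. rewrite !artanh_split by lra. replace (1 + - x) with (1 - x) by ring. replace (1 - - x) with (1 + x) by ring. ring. Qed.

Lemma dcont f x l : derivable_pt_lim f x l -> continuity_pt f x.
Proof. intros H. apply derivable_continuous_pt. exists l. exact H. Qed.

Lemma deriv_loc (f g : R -> R) x l a b : a < x < b -> (forall y, a < y < b -> g y = f y) ->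
  is_derive g x l -> derivable_pt_lim f x l.
Proof.
  intros Hx Hfg Hd. apply is_derive_Reals. apply (is_derive_ext_loc g); auto.
  assert (Hp : 0 < Rmin (b - x) (x - a)) by (apply Rmin_pos; lra).
  exists (mkposreal _ Hp). intros y Hy. simpl in Hy. unfold ball in Hy; simpl in Hy.
  unfold AbsRing_ball, abs, minus, plus, opp in Hy; simpl in Hy.
  apply Rabs_def2 in Hy. assert (H1 := Rmin_l (b-x) (x-a)). assert (H2 := Rmin_r (b-x) (x-a)).
  apply Hfg. lra.
Qed.

Lemma artanh_gt x : 0 < x < 1 -> x < artanh x.
Proof.
  intros Hx.
  assert (H : artanh 0 - 0 < artanh x - x).
  { apply (strict_incr (fun t => artanh t - t) (fun t => / (1 - t ^ 2) - 1)); try lra.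
    - intros t Ht. apply (dcont _ _ (/ (1 - t ^ 2) - 1)).
      apply derivable_pt_lim_minus; [apply artanh_deriv; lra| apply derivable_pt_lim_id].
    - intros t Ht. apply derivable_pt_lim_minus; [apply artanh_deriv; lra| apply derivable_pt_lim_id].
    - intros t Ht. assert (0 < 1 - t ^ 2 < 1) by nra.
      assert (1 < / (1 - t ^ 2)). { rewrite <- Rinv_1. apply Rinv_lt_contravar; lra. } lra. }
  rewrite artanh_0 in H. lra.
Qed.

Lemma q_deriv t : -1 < t < 1 -> derivable_pt_lim (fun t => t / (1 - t ^ 2) - artanh t) t (2 * t ^ 2 / (1 - t ^ 2) ^ 2).
Proof.
  intros Ht. apply (deriv_loc _ (fun y => y / (1 - y ^ 2) - / 2 * (ln (1 + y) - ln (1 - y))) t _ (-1) 1); auto.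
  { intros y Hy. rewrite artanh_split by lra. reflexivity. }
  auto_derive. repeat split; try lra. nra. field. repeat split; try lra. nra.
Qed.

Lemma artanh_lt z : 0 < z < 1 -> artanh z < z / (1 - z ^ 2).
Proof.
  intros Hz.
  assert (H : 0 / (1 - 0 ^ 2) - artanh 0 < z / (1 - z ^ 2) - artanh z).
  { apply (strict_incr (fun t => t / (1 - t ^ 2) - artanh t) (fun t => 2 * t ^ 2 / (1 - t ^ 2) ^ 2)); try lra.
    - intros t Ht. apply (dcont _ _ _ (q_deriv t ltac:(lra))).
    - intros t Ht. apply q_deriv; lra.
    - intros t Ht. assert (0 < 1 - t ^ 2) by nra. apply Rdiv_lt_0_compat; nra. }
  rewrite artanh_0 in H. replace (0 / (1 - 0 ^ 2)) with 0 in H by field. lra.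
Qed.

Definition rr (z : R) := artanh z / z.

Lemma rr_deriv t : 0 < t < 1 -> derivable_pt_lim rr t ((t / (1 - t ^ 2) - artanh t) / t ^ 2).
Proof.
  intros Ht. apply (deriv_loc _ (fun y => / 2 * (ln (1 + y) - ln (1 - y)) / y) t _ 0 1); auto.
  { intros y Hy. unfold rr. rewrite artanh_split by lra. reflexivity. }
  auto_derive. repeat split; try lra. replace (1 + - t) with (1 - t) by ring. rewrite artanh_split by lra. field. repeat split; try lra. nra.
Qed.

Lemma rr_incr z1 z2 : 0 < z1 -> z1 < z2 -> z2 < 1 -> rr z1 < rr z2.
Proof.
  intros H1 H2 H3.
  apply (strict_incr rr (fun t => (t / (1 - t ^ 2) - artanh t) / t ^ 2)); auto.
  - intros t Ht. apply (dcont _ _ _ (rr_deriv t ltac:(lra))).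
  - intros t Ht. apply rr_deriv; lra.
  - intros t Ht. assert (artanh t < t / (1 - t ^ 2)) by (apply artanh_lt; lra).
    apply Rdiv_lt_0_compat; nra.
Qed.

Lemma rr_cont t : 0 < t < 1 -> continuity_pt rr t.
Proof. intros. apply (dcont _ _ _ (rr_deriv t H)). Qed.

Lemma rr_root K : 1 < K -> exists z, 0 < z < 1 /\ rr z = K.
Proof.
  intros HK.
  set (z0 := sqrt (1 - / K)).
  assert (HiK : 0 < / K < 1). { split. apply Rinv_0_lt_compat; lra. rewrite <- Rinv_1. apply Rinv_lt_contravar; lra. }
  assert (Hz0sq : z0 * z0 = 1 - / K) by (apply sqrt_sqrt; lra).
  assert (Hz0p : 0 < z0) by (apply sqrt_lt_R0; lra).
  assert (Hz0 : 0 < z0 < 1) by nra.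
  assert (Hr0 : rr z0 < K).
  { unfold rr. assert (H := artanh_lt z0 Hz0). apply (Rmult_lt_reg_r z0); auto.
    unfold Rdiv. rewrite Rmult_assoc, Rinv_l, Rmult_1_r by lra.
    replace (1 - z0 ^ 2) with (/ K) in H by (simpl; lra). unfold Rdiv in H. rewrite Rinv_inv in H. lra. }
  set (E := exp (2 * K)).
  assert (HE : 1 < E). { unfold E. assert (H := exp_ineq1 (2 * K) ltac:(lra)). lra. }
  set (z1 := (E - 1) / (E + 1)).
  assert (Hz1 : 0 < z1 < 1). { unfold z1. split. apply Rdiv_lt_0_compat; lra.
    apply (Rmult_lt_reg_r (E + 1)); [lra|]. unfold Rdiv. rewrite Rmult_assoc, Rinv_l by lra. lra. }
  assert (Ha1 : artanh z1 = K).
  { unfold artanh. replace ((1 + z1) / (1 - z1)) with E. unfold E. rewrite ln_exp. field.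
    unfold z1. field. lra. }
  assert (Hr1 : K < rr z1).
  { unfold rr. rewrite Ha1. apply (Rmult_lt_reg_r z1); [lra|].
    unfold Rdiv. rewrite Rmult_assoc, Rinv_l, Rmult_1_r by lra. nra. }
  assert (Hlt : z0 < z1).
  { destruct (Rlt_le_dec z0 z1) as [h|h]; auto. destruct (Rle_lt_or_eq_dec _ _ h) as [h'|h'].
    - assert (rr z1 < rr z0) by (apply rr_incr; lra). lra.
    - rewrite h' in Hr1. lra. }
  destruct (Ranalysis5.IVT_interv (fun z => rr z - K) z0 z1) as [z [Hz Ez]]; auto.
  - intros a Ha. apply continuity_pt_minus. apply rr_cont; lra. apply continuity_pt_const. intros u v; reflexivity.
  - lra.
  - lra.
  - exists z. split; lra.
Qed.

Lemma tanh_artanh z : -1 < z < 1 -> tanh (artanh z) = z.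
Proof.
  intros Hz. unfold tanh, sinh, cosh.
  set (e := exp (artanh z)). assert (He : 0 < e) by apply exp_pos.
  assert (Hee : e * e = (1 + z) / (1 - z)).
  { unfold e. rewrite <- exp_plus. replace (artanh z + artanh z)
      with (ln ((1 + z) / (1 - z))) by (unfold artanh; field). apply exp_ln. apply Rdiv_lt_0_compat; lra. }
  rewrite exp_Ropp. fold e.
  replace ((e - / e) / 2 / ((e + / e) / 2)) with ((e * e - 1) / (e * e + 1)) by (field; nra).
  rewrite Hee. field. lra.
Qed.

Lemma tanh_bounds y : -1 < tanh y < 1.
Proof.
  unfold tanh, sinh, cosh. rewrite exp_Ropp. set (e := exp y). assert (He : 0 < e) by apply exp_pos.
  replace ((e - / e) / 2 / ((e + / e) / 2)) with ((e * e - 1) / (e * e + 1)) by (field; nra).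
  assert (0 < e * e + 1) by nra.
  split; [apply (Rmult_lt_reg_r (e * e + 1))|apply (Rmult_lt_reg_r (e * e + 1))]; auto;
  unfold Rdiv; rewrite Rmult_assoc, Rinv_l by lra; nra.
Qed.

Lemma artanh_tanh y : artanh (tanh y) = y.
Proof.
  unfold artanh. replace ((1 + tanh y) / (1 - tanh y)) with (exp (y + y)).
  rewrite ln_exp. field.
  unfold tanh, sinh, cosh. rewrite exp_Ropp, exp_plus. set (e := exp y). assert (He : 0 < e) by apply exp_pos.
  field. nra.
Qed.

Lemma tanh_fix_iff K z : 0 < z -> (tanh (K * z) = z <-> (z < 1 /\ artanh z = K * z)).
Proof.
  intros Hz. split.
  - intros E. assert (H := tanh_bounds (K * z)). split; [lra|]. rewrite <- E at 1. rewrite artanh_tanh. reflexivity.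
  - intros [H1 H2]. rewrite <- H2. apply tanh_artanh. lra.
Qed.

Lemma Gf_deriv K x : -1 < x < 1 -> derivable_pt_lim (Gf K) x (K * x - artanh x).
Proof.
  intros Hx. unfold Gf. apply (derivable_pt_lim_minus (fun x => K / 2 * x ^ 2) I_rate).
  - apply is_derive_Reals. auto_derive; auto. field.
  - apply I_deriv; auto.
Qed.

Lemma Gf_abs K x : Gf K x = Gf K (Rabs x).
Proof. unfold Rabs. destruct (Rcase_abs x); [rewrite Gf_even|]; reflexivity. Qed.

Lemma Gf_dec_small K a b : K <= 1 -> 0 <= a -> a < b -> b <= 1 -> Gf K b < Gf K a.
Proof.
  intros HK Ha Hab Hb.
  assert (H : - Gf K a < - Gf K b).
  { apply (strict_incr (fun x => - Gf K x) (fun x => artanh x - K * x)); auto.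
    - intros x _. apply continuity_pt_opp. apply Gf_cont.
    - intros x Hx. replace (artanh x - K * x) with (- (K * x - artanh x)) by ring.
      apply derivable_pt_lim_opp. apply Gf_deriv. lra.
    - intros x Hx. assert (x < artanh x) by (apply artanh_gt; lra). nra. }
  lra.
Qed.

Lemma Gf_inc_big K z a b : 0 < z < 1 -> rr z = K -> 0 <= a -> a < b -> b <= z -> Gf K a < Gf K b.
Proof.
  intros Hz Hr Ha Hab Hb.
  apply (strict_incr (Gf K) (fun x => K * x - artanh x)); auto.
  - intros x _. apply Gf_cont.
  - intros x Hx. apply Gf_deriv. lra.
  - intros x Hx. assert (rr x < rr z) by (apply rr_incr; lra). unfold rr in *.
    assert (artanh x < K * x). { rewrite <- Hr. apply (Rmult_lt_reg_r (/ x)). apply Rinv_0_lt_compat; lra.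
      replace (artanh z / z * x * / x) with (artanh z / z) by (field; lra). exact H. }
    lra.
Qed.

Lemma Gf_dec_big K z a b : 0 < z < 1 -> rr z = K -> z <= a -> a < b -> b <= 1 -> Gf K b < Gf K a.
Proof.
  intros Hz Hr Ha Hab Hb.
  assert (H : - Gf K a < - Gf K b).
  { apply (strict_incr (fun x => - Gf K x) (fun x => artanh x - K * x)); auto.
    - intros x _. apply continuity_pt_opp. apply Gf_cont.
    - intros x Hx. replace (artanh x - K * x) with (- (K * x - artanh x)) by ring.
      apply derivable_pt_lim_opp. apply Gf_deriv. lra.
    - intros x Hx. assert (rr z < rr x) by (apply rr_incr; lra). unfold rr in *.
      assert (K * x < artanh x). { rewrite <- Hr. apply (Rmult_lt_reg_r (/ x)). apply Rinv_0_lt_compat; lra.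
        replace (artanh z / z * x * / x) with (artanh z / z) by (field; lra). exact H. }
      lra. }
  lra.
Qed.

Definition GapData K Gm (Am : list R) s :=
  0 < s /\ Am <> [] /\
  (forall a, In a Am -> -1 < a < 1 /\ Gf K a = Gm) /\
  (forall x, -1 <= x <= 1 -> Gf K x <= Gm) /\
  (forall x, -1 <= x <= 1 -> Gf K x = Gm -> In x Am) /\
  (forall a b, In a Am -> In b Am -> a <> b -> 2 * s <= Rabs (a - b)) /\
  (forall eps, 0 < eps -> exists d, 0 < d /\ forall x, -1 <= x <= 1 ->
     (forall a, In a Am -> eps <= Rabs (x - a)) -> Gf K x <= Gm - d).

Lemma Gf_small_le K x : K <= 1 -> -1 <= x <= 1 -> x <> 0 -> Gf K x < 0.
Proof.
  intros HK Hx Hx0. rewrite Gf_abs, <- (Gf_0 K).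
  apply Gf_dec_small; [auto|lra|apply Rabs_pos_lt; auto|apply Rabs_le; lra].
Qed.

Lemma gap_small K : K <= 1 -> GapData K 0 [0] 1.
Proof.
  intros HK. refine (conj _ (conj _ (conj _ (conj _ (conj _ (conj _ _)))))).
  - lra.
  - discriminate.
  - intros a Ha; destruct Ha as [Ha|[]]; subst a; split; [lra| apply Gf_0].
  - intros x Hx. destruct (Req_dec x 0) as [->|H]. rewrite Gf_0; lra. apply Rlt_le, Gf_small_le; auto.
  - intros x Hx E. destruct (Req_dec x 0) as [->|H]. left; auto. assert (Gf K x < 0) by (apply Gf_small_le; auto). lra.
  - intros a b Ha Hb; destruct Ha as [Ha|[]]; destruct Hb as [Hb|[]]; subst; intros; lra.
  - intros eps He. set (e' := Rmin eps 1). assert (He' : 0 < e' <= 1) by (unfold e'; split; [apply Rmin_pos; lra| apply Rmin_r]).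
    assert (Hee : e' <= eps) by apply Rmin_l.
    exists (- Gf K e'). split.
    + assert (Gf K e' < 0) by (apply Gf_small_le; lra). lra.
    + intros x Hx Ha. specialize (Ha 0 (or_introl eq_refl)). rewrite Rminus_0_r in Ha.
      rewrite Gf_abs. assert (Rabs x <= 1) by (apply Rabs_le; lra).
      destruct (Req_dec (Rabs x) e') as [E|E]. rewrite E; lra.
      assert (Gf K (Rabs x) < Gf K e') by (apply Gf_dec_small; lra). lra.
Qed.

Lemma gap_big K z : 0 < z < 1 -> rr z = K -> GapData K (Gf K z) [z; -z] z.
Proof.
  intros Hz Hr.
  assert (Hle : forall y, 0 <= y <= 1 -> y <> z -> Gf K y < Gf K z).
  { intros y Hy Hyz. destruct (Rlt_le_dec y z).
    - apply (Gf_inc_big K z); auto; lra.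
    - apply (Gf_dec_big K z); auto; lra. }
  assert (Habs : forall x, -1 <= x <= 1 -> 0 <= Rabs x <= 1) by (intros x Hx; split; [apply Rabs_pos|apply Rabs_le; lra]).
  refine (conj _ (conj _ (conj _ (conj _ (conj _ (conj _ _)))))).
  - lra.
  - discriminate.
  - intros a Ha; destruct Ha as [Ha|[Ha|[]]]; subst a; (split; [lra|]); [reflexivity| apply Gf_even].
  - intros x Hx. rewrite Gf_abs. destruct (Req_dec (Rabs x) z) as [->|H]; [lra|]. apply Rlt_le, Hle; auto.
  - intros x Hx E. rewrite Gf_abs in E. destruct (Req_dec (Rabs x) z) as [H|H].
    + unfold Rabs in H. destruct (Rcase_abs x); [right; left; lra| left; lra].
    + assert (Gf K (Rabs x) < Gf K z) by (apply Hle; auto). lra.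
  - intros a b Ha Hb H; destruct Ha as [Ha|[Ha|[]]]; destruct Hb as [Hb|[Hb|[]]]; subst a b; try (exfalso; apply H; reflexivity);
    [rewrite Rabs_right by lra; lra | rewrite Rabs_left by lra; lra].
  - intros eps He. set (e' := Rmin eps (Rmin z (1 - z))).
    assert (He' : 0 < e') by (unfold e'; repeat apply Rmin_pos; lra).
    assert (H1 : e' <= eps) by apply Rmin_l.
    assert (H2 : e' <= z) by (eapply Rle_trans; [apply Rmin_r| apply Rmin_l]).
    assert (H3 : e' <= 1 - z) by (eapply Rle_trans; [apply Rmin_r| apply Rmin_r]).
    assert (G1 : Gf K (z - e') < Gf K z) by (apply Hle; lra).
    assert (G2 : Gf K (z + e') < Gf K z) by (apply Hle; lra).
    exists (Rmin (Gf K z - Gf K (z - e')) (Gf K z - Gf K (z + e'))). split.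
    + apply Rmin_pos; lra.
    + intros x Hx Ha.
      assert (Hy : e' <= Rabs (Rabs x - z)).
      { assert (A1 := Ha z (or_introl eq_refl)). assert (A2 := Ha (- z) (or_intror (or_introl eq_refl))).
        unfold Rabs at 2. destruct (Rcase_abs x).
        - replace (- x - z) with (- (x - - z)) by ring. rewrite Rabs_Ropp. lra.
        - lra. }
      assert (M1 := Rmin_l (Gf K z - Gf K (z - e')) (Gf K z - Gf K (z + e'))).
      assert (M2 := Rmin_r (Gf K z - Gf K (z - e')) (Gf K z - Gf K (z + e'))).
      rewrite Gf_abs. destruct (Habs x Hx) as [Hx1 Hx2]. set (y := Rabs x) in *.
      destruct (Rlt_le_dec y z).
      * rewrite Rabs_left in Hy by lra.
        assert (Gf K y <= Gf K (z - e')).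
        { destruct (Req_dec y (z - e')) as [->|Hn]; [lra|]. apply Rlt_le, (Gf_inc_big K z); auto; lra. }
        lra.
      * rewrite Rabs_right in Hy by lra.
        assert (Gf K y <= Gf K (z + e')).
        { destruct (Req_dec y (z + e')) as [->|Hn]; [lra|]. apply Rlt_le, (Gf_dec_big K z); auto; lra. }
        lra.
Qed.


Lemma Gamma_eq alpha beta x y :
  Gamma alpha beta x y = (Gf ((alpha + beta) / 2) x + Gf ((alpha + beta) / 2) y) / 2 - alpha / 8 * (x - y) ^ 2.
Proof. unfold Gamma, Gf. field. Qed.


Lemma Gamma_le alpha beta Gm s (Am : list R) (halpha : 0 <= alpha) (HG : GapData ((alpha + beta) / 2) Gm Am s) x y : in_square x y -> Gamma alpha beta x y <= Gm.
Proof.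
  intros [Hx Hy]. destruct HG as (_ & _ & _ & Hle & _).
  rewrite Gamma_eq. assert (Hx' := Hle x Hx). assert (Hy' := Hle y Hy).
  assert (0 <= alpha / 8 * (x - y) ^ 2) by (apply Rmult_le_pos; [lra| apply pow2_ge_0]). lra.
Qed.

Lemma max_char alpha beta Gm s (Am : list R) (halpha : 0 <= alpha) (HG : GapData ((alpha + beta) / 2) Gm Am s) x y : is_global_max alpha beta x y <-> (In x Am /\ In y Am /\ (0 < alpha -> x = y)).
Proof.
  assert (HG0 := HG). destruct HG0 as (Hs & Hne & Hin & Hle & Heq & Hsep & Hgap).
  split.
  - intros [[Hx Hy] Hmax].
    destruct Am as [|a l] eqn:EA; [congruence|].
    destruct (Hin a (or_introl eq_refl)) as [Ha Ga].
    assert (H1 := Hmax a a ltac:(split; lra)).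
    rewrite Gamma_eq in H1. rewrite Gamma_eq in H1. rewrite Ga in H1.
    assert (Hx' := Hle x Hx). assert (Hy' := Hle y Hy).
    assert (0 <= alpha / 8 * (x - y) ^ 2) by (apply Rmult_le_pos; [lra| apply pow2_ge_0]).
    replace (a - a) with 0 in H1 by ring.
    split; [|split].
    + apply Heq; auto. lra.
    + apply Heq; auto. lra.
    + intros Ha0. assert (alpha / 8 * (x - y) ^ 2 = 0) by (simpl in *; lra).
      assert ((x - y) ^ 2 = 0). { apply (Rmult_eq_reg_l (alpha / 8)); [lra|]. lra. }
      assert (x - y = 0) by (apply (pow_eq_zero_stt (x - y) 2); auto) || (simpl in *; nra). lra.
  - intros [Hx [Hy Hxy]].
    destruct (Hin x Hx) as [Hx1 Gx]. destruct (Hin y Hy) as [Hy1 Gy].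
    split. split; lra.
    intros y1 y2 Hyy. apply (Rle_trans _ Gm). apply (Gamma_le alpha beta Gm s Am halpha HG); auto.
    rewrite Gamma_eq, Gx, Gy. destruct (Rlt_dec 0 alpha) as [Ha|Ha].
    + rewrite (Hxy Ha). replace (y - y) with 0 by ring. simpl. lra.
    + replace alpha with 0 by lra. lra.
Qed.

Lemma gap2D alpha beta Gm s (Am : list R) (halpha : 0 <= alpha) (HG : GapData ((alpha + beta) / 2) Gm Am s) eps : 0 < eps -> exists d, 0 < d /\ forall y1 y2, in_square y1 y2 ->
  ~ in_nbhd_M alpha beta eps y1 y2 -> Gamma alpha beta y1 y2 <= Gm - d.
Proof.
  intros He. assert (HG' := HG). destruct HG' as (Hs & Hne & Hin & Hle & Heq & Hsep & Hgap).
  set (e' := Rmin eps s). assert (He' : 0 < e') by (apply Rmin_pos; lra).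
  assert (He1 : e' <= eps) by apply Rmin_l. assert (He2 : e' <= s) by apply Rmin_r.
  destruct (Hgap (e' / 2) ltac:(lra)) as [d [Hd Hgd]].
  assert (Hmain : forall y1 y2, in_square y1 y2 -> ~ in_nbhd_M alpha beta eps y1 y2 ->
     Gamma alpha beta y1 y2 <= Gm - d / 2 \/ (0 < alpha /\ s <= Rabs (y1 - y2))).
  { intros y1 y2 [Hy1 Hy2] Hn.
    destruct (classic (forall a, In a Am -> e' / 2 <= Rabs (y1 - a))) as [F1|F1].
    { left. rewrite Gamma_eq. assert (Hgd' := Hgd y1 Hy1 F1). assert (Hy2' := Hle y2 Hy2).
      assert (0 <= alpha / 8 * (y1 - y2) ^ 2) by (apply Rmult_le_pos; [lra| apply pow2_ge_0]). lra. }
    destruct (classic (forall a, In a Am -> e' / 2 <= Rabs (y2 - a))) as [F2|F2].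
    { left. rewrite Gamma_eq. assert (Hgd' := Hgd y2 Hy2 F2). assert (Hy1' := Hle y1 Hy1).
      assert (0 <= alpha / 8 * (y1 - y2) ^ 2) by (apply Rmult_le_pos; [lra| apply pow2_ge_0]). lra. }
    apply not_all_ex_not in F1. destruct F1 as [a F1]. apply imply_to_and in F1. destruct F1 as [Ha F1].
    apply not_all_ex_not in F2. destruct F2 as [b F2]. apply imply_to_and in F2. destruct F2 as [Hb F2].
    apply Rnot_le_lt in F1. apply Rnot_le_lt in F2.
    destruct (classic (0 < alpha /\ a <> b)) as [[Ha0 Hab]|Hc].
    - right. split; auto. assert (Hs2 := Hsep a b Ha Hb Hab).
      assert (Rabs (a - b) <= Rabs (y1 - y2) + Rabs (y1 - a) + Rabs (y2 - b)).
      { replace (a - b) with ((y1 - y2) - (y1 - a) + (y2 - b)) by ring.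
        eapply Rle_trans; [apply Rabs_triang|]. 
        assert (Rabs (y1 - y2 - (y1 - a)) <= Rabs (y1 - y2) + Rabs (y1 - a)) by
          (unfold Rminus at 1; eapply Rle_trans; [apply Rabs_triang| rewrite Rabs_Ropp; lra]). lra. }
      lra.
    - exfalso. apply Hn. exists a, b. split.
      + apply (max_char alpha beta Gm s Am halpha HG). split; auto. split; auto. intros Ha0.
        destruct (Req_dec a b); auto. exfalso; apply Hc; auto.
      + apply Rabs_def2 in F1. apply Rabs_def2 in F2.
        rewrite <- (sqrt_pow2 eps) by lra. apply sqrt_lt_1_alt. split.
        * apply Rplus_le_le_0_compat; apply pow2_ge_0.
        * nra. }
  destruct (Rlt_dec 0 alpha) as [Ha0|Ha0].
  - exists (Rmin (d / 2) (alpha / 8 * s ^ 2)). split.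
    + apply Rmin_pos. lra. apply Rmult_lt_0_compat. lra. apply pow_lt; lra.
    + intros y1 y2 Hsq Hn. assert (M1 := Rmin_l (d / 2) (alpha / 8 * s ^ 2)). assert (M2 := Rmin_r (d / 2) (alpha / 8 * s ^ 2)).
      destruct (Hmain y1 y2 Hsq Hn) as [H|[_ H]]; [lra|].
      rewrite Gamma_eq. destruct Hsq as [Hy1 Hy2]. assert (Hy1' := Hle y1 Hy1). assert (Hy2' := Hle y2 Hy2).
      assert (s ^ 2 <= (y1 - y2) ^ 2). { rewrite <- (pow2_abs (y1 - y2)). apply pow_incr. lra. }
      assert (alpha / 8 * s ^ 2 <= alpha / 8 * (y1 - y2) ^ 2) by (apply Rmult_le_compat_l; lra). lra.
  - exists (d / 2). split. lra. intros y1 y2 Hsq Hn. destruct (Hmain y1 y2 Hsq Hn) as [H|[H _]]; lra.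
Qed.

Definition ma (n a : nat) := 2 * INR a / INR n - 1.

Lemma exp_pow_ln u (c : nat) : 0 < u -> exp (INR c * ln u) = u ^ c.
Proof. intros. rewrite <- ln_pow by auto. apply exp_ln. apply pow_lt; auto. Qed.

Lemma half_id (n c : nat) : (0 < n)%nat -> (c <= n)%nat ->
  exp (INR n / 2 * xlogx (2 * INR c / INR n)) * INR n ^ c = 2 ^ c * INR c ^ c.
Proof.
  intros Hn Hc. assert (Hn' : 0 < INR n) by (apply lt_0_INR; auto).
  destruct c as [|c'].
  - simpl INR. replace (2 * 0 / INR n) with 0 by (field; lra). rewrite xlogx_npos by lra.
    rewrite Rmult_0_r, exp_0. simpl. ring.
  - set (c := S c'). assert (Hc' : 0 < INR c) by (apply lt_0_INR; unfold c; lia).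
    assert (Hu : 0 < 2 * INR c / INR n) by (apply Rdiv_lt_0_compat; lra).
    rewrite xlogx_pos by auto.
    replace (INR n / 2 * (2 * INR c / INR n * ln (2 * INR c / INR n))) with (INR c * ln (2 * INR c / INR n)) by (field; lra).
    rewrite exp_pow_ln by auto. rewrite <- Rpow_mult_distr.
    replace (2 * INR c / INR n * INR n) with (2 * INR c) by (field; lra). apply Rpow_mult_distr.
Qed.

Lemma expI (n a : nat) : (0 < n)%nat -> (a <= n)%nat ->
  exp (INR n * I_rate (ma n a)) * INR n ^ n = 2 ^ n * INR a ^ a * INR (n - a) ^ (n - a).
Proof.
  intros Hn Ha. assert (Hn' : 0 < INR n) by (apply lt_0_INR; auto).
  unfold I_rate, ma.
  replace (1 + (2 * INR a / INR n - 1)) with (2 * INR a / INR n) by ring.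
  replace (1 - (2 * INR a / INR n - 1)) with (2 * INR (n - a) / INR n) by (rewrite minus_INR by auto; field; lra).
  replace (INR n * (/ 2 * xlogx (2 * INR a / INR n) + / 2 * xlogx (2 * INR (n - a) / INR n)))
    with (INR n / 2 * xlogx (2 * INR a / INR n) + INR n / 2 * xlogx (2 * INR (n - a) / INR n)) by field.
  rewrite exp_plus.
  replace (INR n ^ n) with (INR n ^ a * INR n ^ (n - a)) by (rewrite <- pow_add; f_equal; lia).
  replace (2 ^ n) with (2 ^ a * 2 ^ (n - a)) by (rewrite <- pow_add; f_equal; lia).
  transitivity ((exp (INR n / 2 * xlogx (2 * INR a / INR n)) * INR n ^ a) *
                (exp (INR n / 2 * xlogx (2 * INR (n - a) / INR n)) * INR n ^ (n - a))); [ring|].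
  rewrite !half_id by (auto; lia). ring.
Qed.

Lemma coef_bounds (n a : nat) : (0 < n)%nat -> (a <= n)%nat ->
  Rb n a * exp (INR n * I_rate (ma n a)) <= 2 ^ n /\
  2 ^ n <= INR (S n) * (Rb n a * exp (INR n * I_rate (ma n a))).
Proof.
  intros Hn Ha. assert (Hn' : 0 < INR n) by (apply lt_0_INR; auto).
  assert (Hnn : 0 < INR n ^ n) by (apply pow_lt; auto).
  assert (E : (Rb n a * exp (INR n * I_rate (ma n a))) * INR n ^ n = T n a a * 2 ^ n).
  { unfold T. rewrite Rmult_assoc, expI by auto. ring. }
  destruct (T_bounds n a Ha) as [B1 B2].
  assert (H2 : 0 < 2 ^ n) by (apply pow_lt; lra).
  set (X := Rb n a * exp (INR n * I_rate (ma n a))) in *.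
  assert (HS : 0 <= INR (S n)) by apply pos_INR.
  split.
  - apply (Rmult_le_reg_r (INR n ^ n)); auto. rewrite E. rewrite Rmult_comm. apply Rmult_le_compat_l; lra.
  - apply (Rmult_le_reg_r (INR n ^ n)); auto. rewrite Rmult_assoc, E.
    rewrite Rmult_comm. rewrite <- Rmult_assoc. apply Rmult_le_compat_r; lra.
Qed.

Lemma poly_exp c : 0 < c -> exists n0 : nat, forall n : nat, (n0 <= n)%nat -> (INR n + 1) ^ 4 <= exp (c * INR n).
Proof.
  intros Hc. set (u := c / 5). assert (Hu : 0 < u) by (unfold u; lra).
  assert (Hu5 : 0 < u ^ 5) by (apply pow_lt; auto).
  destruct (INR_unbounded (16 / u ^ 5)) as [m Hm].
  exists (S m). intros n Hn.
  assert (Hn1 : 1 <= INR n) by (replace 1 with (INR 1) by reflexivity; apply le_INR; lia).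
  assert (Hnm : INR m <= INR n) by (apply le_INR; lia).
  assert (H16 : 16 < u ^ 5 * INR n).
  { apply (Rmult_lt_reg_l (/ u ^ 5)). apply Rinv_0_lt_compat; auto.
    replace (/ u ^ 5 * (u ^ 5 * INR n)) with (INR n) by (field; lra). unfold Rdiv in Hm. lra. }
  assert (E : exp (c * INR n) = exp (u * INR n) ^ 5).
  { replace (c * INR n) with (u * INR n + (u * INR n + (u * INR n + (u * INR n + u * INR n)))) by (unfold u; field).
    rewrite !exp_plus. simpl. ring. }
  assert (Hx : u * INR n < exp (u * INR n)).
  { assert (H := exp_ineq1 (u * INR n) ltac:(nra)). lra. }
  assert (P1 : (u * INR n) ^ 5 <= exp (u * INR n) ^ 5) by (apply pow_incr; nra).
  assert (P2 : (INR n + 1) ^ 4 <= (2 * INR n) ^ 4) by (apply pow_incr; lra).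
  assert (P3 : (2 * INR n) ^ 4 <= (u * INR n) ^ 5).
  { replace ((2 * INR n) ^ 4) with (16 * INR n ^ 4) by ring.
    replace ((u * INR n) ^ 5) with ((u ^ 5 * INR n) * INR n ^ 4) by ring.
    apply Rmult_le_compat_r. apply pow_le; lra. lra. }
  rewrite E. lra.
Qed.

Lemma lattice_nat (n : nat) t : 0 <= t <= INR n -> exists k, (k <= n)%nat /\ Rabs (INR k - t) <= 1.
Proof.
  revert t; induction n; intros t Ht.
  - exists 0%nat. split; auto. simpl in *. replace (0 - t) with 0 by lra. rewrite Rabs_R0. lra.
  - destruct (Rle_dec t 1).
    + exists 0%nat. split; [lia|]. simpl. rewrite Rabs_left1 by lra. lra.
    + rewrite S_INR in Ht. destruct (IHn (t - 1) ltac:(lra)) as [k [Hk Hk']].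
      exists (S k). split; [lia|]. rewrite S_INR. replace (INR k + 1 - t) with (INR k - (t - 1)) by ring. auto.
Qed.

Lemma lattice (n : nat) a : (0 < n)%nat -> -1 <= a <= 1 -> exists k, (k <= n)%nat /\ Rabs (ma n k - a) <= 2 / INR n.
Proof.
  intros Hn Ha. assert (Hn' : 0 < INR n) by (apply lt_0_INR; auto).
  destruct (lattice_nat n (INR n * (1 + a) / 2)) as [k [Hk Hk']].
  { split. apply Rmult_le_pos; [|lra]. apply Rmult_le_pos; lra.
    apply (Rmult_le_reg_r 2); [lra|]. unfold Rdiv. rewrite Rmult_assoc, Rinv_l by lra. nra. }
  exists k. split; auto.
  replace (ma n k - a) with (2 / INR n * (INR k - INR n * (1 + a) / 2)) by (unfold ma; field; lra).
  rewrite Rabs_mult, (Rabs_right (2 / INR n)) by (apply Rle_ge, Rlt_le, Rdiv_lt_0_compat; lra).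
  rewrite <- (Rmult_1_r (2 / INR n)) at 2. apply Rmult_le_compat_l; auto.
  apply Rlt_le, Rdiv_lt_0_compat; lra.
Qed.

Lemma ma_sq (n a : nat) : (0 < n)%nat -> (a <= n)%nat -> -1 <= ma n a <= 1.
Proof.
  intros Hn Ha. assert (Hn' : 0 < INR n) by (apply lt_0_INR; auto).
  assert (0 <= INR a <= INR n) by (split; [apply pos_INR| apply le_INR; auto]).
  unfold ma. split.
  - assert (0 <= 2 * INR a / INR n) by (apply Rmult_le_pos; [lra| apply Rlt_le, Rinv_0_lt_compat; lra]). lra.
  - assert (2 * INR a / INR n <= 2). { apply (Rmult_le_reg_r (INR n)); auto. unfold Rdiv. rewrite Rmult_assoc, Rinv_l by lra. lra. }
    lra.
Qed.

Definition Wf N alpha beta A B :=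
  exp (- (- (beta / (2 * INR N)) * (A ^ 2 + B ^ 2) - (alpha / (2 * INR N)) * (2 * A * B))).

Lemma weight_eq N alpha beta S sigma : weight N alpha beta S sigma = Wf N alpha beta (blkA S N sigma) (blkB S N sigma).
Proof. unfold weight, Wf. rewrite Ham_eq. reflexivity. Qed.

Lemma Wf_lattice N n alpha beta a b : INR N = 2 * INR n -> (0 < n)%nat ->
  Wf N alpha beta (2 * INR a - INR n) (2 * INR b - INR n) =
  exp (INR N * Gamma alpha beta (ma n a) (ma n b)) * exp (INR n * I_rate (ma n a)) * exp (INR n * I_rate (ma n b)).
Proof.
  intros HN Hn. assert (Hn' : 0 < INR n) by (apply lt_0_INR; auto).
  unfold Wf. rewrite <- !exp_plus. f_equal. unfold Gamma, ma. rewrite HN. field. lra.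
Qed.

Lemma mag_lattice N n a : INR N = 2 * INR n -> (0 < n)%nat -> 2 / INR N * (2 * INR a - INR n) = ma n a.
Proof. intros HN Hn. assert (0 < INR n) by (apply lt_0_INR; auto). unfold ma. rewrite HN. field. lra. Qed.

Lemma cnt_le n g Q : (forall a b, (a <= n)%nat -> (b <= n)%nat ->
    Rb n a * (Rb n b * g (2 * INR a - INR n) (2 * INR b - INR n)) <= Q) ->
  cnt n n g <= INR (S n) * (INR (S n) * Q).
Proof.
  intros H. unfold cnt. eapply Rle_trans; [apply (sumR_le_const _ _ (INR (S n) * Q))|rewrite length_seq; lra].
  intros a Ha. apply in_seq0 in Ha. rewrite <- sumR_scal.
  eapply Rle_trans; [apply (sumR_le_const _ _ Q)|rewrite length_seq; lra].
  intros b Hb. apply in_seq0 in Hb. rewrite <- Rmult_assoc. rewrite Rmult_assoc. apply H; lia.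
Qed.

Lemma cnt_ge n g k : (forall a b, (a <= n)%nat -> (b <= n)%nat -> 0 <= g (2 * INR a - INR n) (2 * INR b - INR n)) ->
  (k <= n)%nat ->
  Rb n k * (Rb n k * g (2 * INR k - INR n) (2 * INR k - INR n)) <= cnt n n g.
Proof.
  intros H Hk. unfold cnt.
  assert (Hin : forall a, (a <= n)%nat -> 0 <= sumR (seq 0 (S n)) (fun b => Rb n b * g (2 * INR a - INR n) (2 * INR b - INR n))).
  { intros a Ha. apply sumR_nonneg. intros b Hb. apply in_seq0 in Hb. apply Rmult_le_pos. apply Rb_nonneg. apply H; lia. }
  eapply Rle_trans; [|apply (sumR_ge_elem _ _ k)].
  - apply Rmult_le_compat_l. apply Rb_nonneg.
    apply (sumR_ge_elem _ (fun b => Rb n b * g (2 * INR k - INR n) (2 * INR b - INR n)) k).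
    + intros b Hb. apply in_seq0 in Hb. apply Rmult_le_pos. apply Rb_nonneg. apply H; lia.
    + apply in_seq0; lia.
  - intros a Ha. apply in_seq0 in Ha. apply Rmult_le_pos. apply Rb_nonneg. apply Hin; lia.
  - apply in_seq0; lia.
Qed.

Lemma cont_eps f x : continuity_pt f x -> forall e, 0 < e -> exists d, 0 < d /\ forall y, Rabs (y - x) < d -> Rabs (f y - f x) < e.
Proof.
  intros Hc e He. destruct (Hc e He) as [d [Hd H]]. exists d. split; auto.
  intros y Hy. destruct (Req_dec y x) as [->|Hne].
  - rewrite Rminus_diag, Rabs_R0; auto.
  - apply (H y). split. split; [exact I| auto]. exact Hy.
Qed.

Lemma concentration_abs alpha beta Gm Am s : 0 <= alpha ->
  GapData ((alpha + beta) / 2) Gm Am s ->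
  forall eps, 0 < eps -> exists c, 0 < c /\ exists N0 : nat,
     forall (N : nat) (S : nat -> bool), (N0 <= N)%nat -> valid_block N S ->
       gibbs_prob N alpha beta S
         (fun sigma => ~ in_nbhd_M alpha beta eps (mag1 N S sigma) (mag2 N S sigma))
       <= exp (- c * INR N).
Proof.
  intros Ha HG eps He.
  destruct (gap2D alpha beta Gm s Am Ha HG eps He) as [d [Hd Hgap]].
  assert (HG' := HG). destruct HG' as (Hs & Hne & Hin & Hle & Heq & Hsep & _).
  set (K := (alpha + beta) / 2) in *.
  destruct Am as [|a0 Am'] eqn:EAm; [congruence|].
  destruct (Hin a0 (or_introl eq_refl)) as [Ha0 Ga0].
  destruct (cont_eps (Gf K) a0 (Gf_cont K a0) (d / 4) ltac:(lra)) as [dc [Hdc Hcont]].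
  destruct (poly_exp d Hd) as [n1 Hn1].
  destruct (INR_unbounded (2 / dc)) as [n2 Hn2].
  exists (d / 4). split; [lra|]. exists (2 * S (n1 + n2))%nat.
  intros N Sb HN [Hev Hcard].
  set (n := card_block N Sb) in *.
  assert (HnN : N = (2 * n)%nat) by lia.
  assert (HNR : INR N = 2 * INR n) by (rewrite HnN, mult_INR; reflexivity).
  assert (Hn0 : (0 < n)%nat) by lia.
  assert (Hnr : 0 < INR n) by (apply lt_0_INR; auto).
  assert (HB : cardB N Sb = n) by (assert (H := card_sum N Sb); fold n in H; lia).
  set (g := fun A B => match excluded_middle_informative
             (~ in_nbhd_M alpha beta eps (2 / INR N * A) (2 / INR N * B)) with
             | left _ => Wf N alpha beta A B | right _ => 0 end).
  assert (ENum : sumR (cube N) (fun sigma =>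
     match excluded_middle_informative (~ in_nbhd_M alpha beta eps (mag1 N Sb sigma) (mag2 N Sb sigma)) with
     | left _ => weight N alpha beta Sb sigma | right _ => 0 end) = cnt n n g).
  { rewrite <- HB at 2. unfold n. rewrite <- counting. apply sumR_ext. intros sigma _. unfold g.
    destruct (excluded_middle_informative (~ in_nbhd_M alpha beta eps (mag1 N Sb sigma) (mag2 N Sb sigma))) as [p|p];
    destruct (excluded_middle_informative (~ in_nbhd_M alpha beta eps (2 / INR N * blkA Sb N sigma) (2 / INR N * blkB Sb N sigma))) as [q|q].
    - apply weight_eq.
    - exfalso. exact (q p).
    - exfalso. exact (p q).
    - reflexivity. }
  assert (EZ : partition_fn N alpha beta Sb = cnt n n (Wf N alpha beta)).
  { unfold partition_fn. rewrite <- HB at 2. unfold n. rewrite <- counting. apply sumR_ext. intros sigma _. apply weight_eq. }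
  unfold gibbs_prob. rewrite ENum, EZ.
  set (Q := 2 ^ n * 2 ^ n * exp (INR N * (Gm - d))).
  assert (UB : cnt n n g <= INR (S n) * (INR (S n) * Q)).
  { apply cnt_le. intros a b Han Hbn. unfold g.
    destruct (excluded_middle_informative _) as [p|p].
    - rewrite Wf_lattice with (n := n) by auto.
      rewrite !mag_lattice in p by auto.
      assert (Hsq : in_square (ma n a) (ma n b)) by (split; apply ma_sq; auto).
      assert (HGm := Hgap _ _ Hsq p).
      destruct (coef_bounds n a Hn0 Han) as [Ca _]. destruct (coef_bounds n b Hn0 Hbn) as [Cb _].
      assert (E1 : exp (INR N * Gamma alpha beta (ma n a) (ma n b)) <= exp (INR N * (Gm - d))).
      { apply exp_le_inv_le_aux || (destruct (Req_dec (INR N * Gamma alpha beta (ma n a) (ma n b)) (INR N * (Gm - d))) as [Eq|Neq];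
          [rewrite Eq; lra| apply Rlt_le, exp_increasing; assert (0 < INR N) by lra; nra]). }
      assert (P1 : 0 <= Rb n a * exp (INR n * I_rate (ma n a))) by (apply Rmult_le_pos; [apply Rb_nonneg| apply Rlt_le, exp_pos]).
      assert (P2 : 0 <= Rb n b * exp (INR n * I_rate (ma n b))) by (apply Rmult_le_pos; [apply Rb_nonneg| apply Rlt_le, exp_pos]).
      assert (P3 : 0 < exp (INR N * Gamma alpha beta (ma n a) (ma n b))) by apply exp_pos.
      replace (Rb n a * (Rb n b * (exp (INR N * Gamma alpha beta (ma n a) (ma n b)) * exp (INR n * I_rate (ma n a)) *
                exp (INR n * I_rate (ma n b)))))
        with ((Rb n a * exp (INR n * I_rate (ma n a))) * (Rb n b * exp (INR n * I_rate (ma n b))) *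
              exp (INR N * Gamma alpha beta (ma n a) (ma n b))) by ring.
      unfold Q. apply Rmult_le_compat; try lra. apply Rmult_le_pos; auto. apply Rmult_le_compat; lra.
    - rewrite !Rmult_0_r. unfold Q. apply Rmult_le_pos; [apply Rmult_le_pos; apply pow_le; lra| apply Rlt_le, exp_pos]. }
  destruct (lattice n a0 Hn0 ltac:(lra)) as [k [Hk Hk']].
  assert (Hsn : 2 / INR n < dc).
  { assert (INR (S (n1 + n2)) <= INR n) by (apply le_INR; lia).
    rewrite S_INR, plus_INR in H. assert (INR n2 <= INR n) by (assert (0 <= INR n1) by apply pos_INR; lra).
    apply (Rmult_lt_reg_r (INR n)); auto. unfold Rdiv. rewrite Rmult_assoc, Rinv_l, Rmult_1_r by lra.
    apply (Rmult_lt_reg_l (/ dc)). apply Rinv_0_lt_compat; auto.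
    replace (/ dc * (dc * INR n)) with (INR n) by (field; lra). unfold Rdiv in Hn2. lra. }
  assert (Hgk : Gm - d / 4 <= Gf K (ma n k)).
  { assert (H := Hcont (ma n k) ltac:(lra)). rewrite Ga0 in H. apply Rabs_def2 in H. lra. }
  assert (LB : 2 ^ n * 2 ^ n * exp (INR N * (Gm - d / 4)) <= INR (S n) * INR (S n) * cnt n n (Wf N alpha beta)).
  { eapply Rle_trans; [|apply Rmult_le_compat_l; [apply Rmult_le_pos; apply pos_INR|apply (cnt_ge n _ k)]].
    2:{ intros a b _ _. apply Rlt_le, exp_pos. }
    2:{ auto. }
    rewrite Wf_lattice with (n := n) by auto.
    destruct (coef_bounds n k Hn0 Hk) as [_ Ck].
    assert (Gk : Gamma alpha beta (ma n k) (ma n k) = Gf K (ma n k)).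
    { rewrite Gamma_eq. fold K. replace (ma n k - ma n k) with 0 by ring. simpl. field. }
    rewrite Gk.
    assert (E1 : exp (INR N * (Gm - d / 4)) <= exp (INR N * Gf K (ma n k))).
    { destruct (Req_dec (INR N * (Gm - d / 4)) (INR N * Gf K (ma n k))) as [Eq|Neq];
          [rewrite Eq; lra| apply Rlt_le, exp_increasing; assert (0 < INR N) by lra; nra]. }
    set (X := Rb n k * exp (INR n * I_rate (ma n k))) in *.
    replace (INR (S n) * INR (S n) * (Rb n k * (Rb n k * (exp (INR N * Gf K (ma n k)) * exp (INR n * I_rate (ma n k)) * exp (INR n * I_rate (ma n k))))))
      with ((INR (S n) * X) * (INR (S n) * X) * exp (INR N * Gf K (ma n k))) by (unfold X; ring).
    assert (0 <= 2 ^ n) by (apply pow_le; lra).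
    apply Rmult_le_compat; try lra. apply Rmult_le_pos; auto. apply Rlt_le, exp_pos.
    apply Rmult_le_compat; lra. }
  set (Z := cnt n n (Wf N alpha beta)) in *.
  set (Num := cnt n n g) in *.
  assert (HSn : 0 < INR (S n)) by (apply lt_0_INR; lia).
  assert (HQ0 : 0 < 2 ^ n * 2 ^ n) by (apply Rmult_lt_0_compat; apply pow_lt; lra).
  assert (HZ : 0 < Z).
  { assert (0 < 2 ^ n * 2 ^ n * exp (INR N * (Gm - d / 4))) by (apply Rmult_lt_0_compat; [auto|apply exp_pos]).
    assert (0 < INR (S n) * INR (S n) * Z) by lra.
    destruct (Rlt_le_dec 0 Z) as [h|h]; auto. assert (INR (S n) * INR (S n) * Z <= 0).
    { rewrite <- (Rmult_0_r (INR (S n) * INR (S n))). apply Rmult_le_compat_l; [apply Rlt_le, Rmult_lt_0_compat|]; auto. } lra. }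
  assert (Hpoly := Hn1 n ltac:(lia)). rewrite <- S_INR in Hpoly.
  assert (Hexp : INR (S n) ^ 4 * exp (INR N * (Gm - d)) <= exp (- (d / 4) * INR N) * exp (INR N * (Gm - d / 4))).
  { rewrite <- exp_plus. replace (- (d / 4) * INR N + INR N * (Gm - d / 4)) with (d * INR n + INR N * (Gm - d)) by (rewrite HNR; field).
    rewrite exp_plus. apply Rmult_le_compat_r. apply Rlt_le, exp_pos. auto. }
  apply (Rmult_le_reg_r (INR (S n) * INR (S n) * Z)). apply Rmult_lt_0_compat; auto; apply Rmult_lt_0_compat; auto.
  replace (Num / Z * (INR (S n) * INR (S n) * Z)) with (INR (S n) * INR (S n) * Num) by (field; lra).
  apply Rle_trans with (INR (S n) ^ 4 * Q).
  { replace (INR (S n) ^ 4 * Q) with (INR (S n) * INR (S n) * (INR (S n) * (INR (S n) * Q))) by ring.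
    apply Rmult_le_compat_l; [apply Rlt_le, Rmult_lt_0_compat|]; auto. }
  apply Rle_trans with (exp (- (d / 4) * INR N) * (2 ^ n * 2 ^ n * exp (INR N * (Gm - d / 4)))).
  { unfold Q. replace (INR (S n) ^ 4 * (2 ^ n * 2 ^ n * exp (INR N * (Gm - d))))
      with ((2 ^ n * 2 ^ n) * (INR (S n) ^ 4 * exp (INR N * (Gm - d)))) by ring.
    replace (exp (- (d / 4) * INR N) * (2 ^ n * 2 ^ n * exp (INR N * (Gm - d / 4))))
      with ((2 ^ n * 2 ^ n) * (exp (- (d / 4) * INR N) * exp (INR N * (Gm - d / 4)))) by ring.
    apply Rmult_le_compat_l; lra. }
  replace (exp (- (d / 4) * INR N) * (INR (S n) * INR (S n) * Z)) with (exp (- (d / 4) * INR N) * (INR (S n) * INR (S n) * Z)) by ring.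
  apply Rmult_le_compat_l. apply Rlt_le, exp_pos. auto.
Qed.


Lemma artanh_abs x : -1 < x < 1 -> x <> 0 -> Rabs x < Rabs (artanh x).
Proof.
  intros Hx Hx0. destruct (Rlt_le_dec 0 x) as [Hp|Hn].
  - assert (H := artanh_gt x ltac:(lra)). rewrite !Rabs_right by lra. lra.
  - assert (Hn' : x < 0) by lra. assert (H := artanh_gt (- x) ltac:(lra)).
    rewrite artanh_odd in H by lra. rewrite !Rabs_left by lra. lra.
Qed.

Lemma lin_bound beta alpha x y : 0 <= alpha -> 0 <= beta ->
  Rabs (/ 2 * beta * x + / 2 * alpha * y) <= / 2 * beta * Rabs x + / 2 * alpha * Rabs y.
Proof.
  intros Ha Hb. eapply Rle_trans; [apply Rabs_triang|].
  rewrite !Rabs_mult. rewrite (Rabs_right (/2)) by lra. rewrite (Rabs_right beta), (Rabs_right alpha) by lra. lra.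
Qed.

Lemma crit_zero alpha beta x1 x2 : 0 <= alpha -> 0 < beta -> alpha + beta <= 2 ->
  -1 < x1 < 1 -> -1 < x2 < 1 ->
  / 2 * beta * x1 + / 2 * alpha * x2 = artanh x1 ->
  / 2 * beta * x2 + / 2 * alpha * x1 = artanh x2 -> x1 = 0 /\ x2 = 0.
Proof.
  intros Ha Hb Hab Hx1 Hx2 E1 E2.
  assert (A1 := Rabs_pos x1). assert (A2 := Rabs_pos x2).
  destruct (Rle_dec (Rabs x2) (Rabs x1)) as [H|H].
  - destruct (Req_dec x1 0) as [->|Hne].
    + rewrite Rabs_R0 in H. split; auto. destruct (Req_dec x2 0); auto. assert (Rabs x2 > 0) by (apply Rabs_pos_lt; auto). lra.
    + exfalso. assert (L := artanh_abs x1 Hx1 Hne). rewrite <- E1 in L.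
      assert (B := lin_bound beta alpha x1 x2 Ha ltac:(lra)). nra.
  - destruct (Req_dec x2 0) as [->|Hne].
    + rewrite Rabs_R0 in H. lra.
    + exfalso. assert (L := artanh_abs x2 Hx2 Hne). rewrite <- E2 in L.
      assert (B := lin_bound beta alpha x2 x1 Ha ltac:(lra)). nra.
Qed.

Lemma gapdata_exists alpha beta : 0 < (alpha + beta) / 2 ->
  exists Gm Am s, GapData ((alpha + beta) / 2) Gm Am s.
Proof.
  intros HK. destruct (Rle_dec ((alpha + beta) / 2) 1) as [H|H].
  - exists 0, [0], 1. apply gap_small; auto.
  - destruct (rr_root ((alpha + beta) / 2) ltac:(lra)) as [z [Hz Hr]].
    exists (Gf ((alpha + beta) / 2) z), [z; - z], z. apply gap_big; auto.
Qed.

Lemma cube_ne N : exists sigma, In sigma (cube N).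
Proof. induction N; simpl. exists []. auto. destruct IHN as [s Hs]. exists (true :: s).
  apply in_or_app. left. apply in_map. auto. Qed.

Lemma Z_pos N alpha beta S : 0 < partition_fn N alpha beta S.
Proof.
  unfold partition_fn. destruct (cube_ne N) as [s Hs]. apply (sumR_pos _ _ s); auto.
  - intros; apply Rlt_le, exp_pos.
  - apply exp_pos.
Qed.

Lemma exp_neg_bound c x : 0 <= c * x -> exp (- c * x) <= / (1 + c * x).
Proof.
  intros H. assert (H1 : 1 + c * x <= exp (c * x)).
  { destruct (Req_dec (c * x) 0) as [E|E]. rewrite E, exp_0. lra. assert (H2 := exp_ineq1 _ E). lra. }
  replace (- c * x) with (- (c * x)) by ring. rewrite exp_Ropp.
  apply Rinv_le_contravar; lra.
Qed.

Lemma abs_le_sqrt x y : Rabs x <= sqrt (x ^ 2 + y ^ 2).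
Proof.
  replace (Rabs x) with (sqrt (x ^ 2)) by (rewrite <- pow2_abs; apply sqrt_pow2; apply Rabs_pos).
  apply sqrt_le_1_alt. assert (0 <= y ^ 2) by apply pow2_ge_0. lra.
Qed.

Lemma weak_conv alpha beta :
  (forall eps, 0 < eps -> exists c, 0 < c /\ exists N0 : nat,
     forall (N : nat) (S : nat -> bool), (N0 <= N)%nat -> valid_block N S ->
       gibbs_prob N alpha beta S
         (fun sigma => ~ in_nbhd_M alpha beta eps (mag1 N S sigma) (mag2 N S sigma))
       <= exp (- c * INR N)) ->
  (forall x1 x2, is_global_max alpha beta x1 x2 <-> (x1 = 0 /\ x2 = 0)) ->
  forall f : R -> R -> R, continuous2 f -> bounded2 f ->
          forall e, 0 < e -> exists N0 : nat,
            forall (N : nat) (S : nat -> bool), (N0 <= N)%nat -> valid_block N S ->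
              Rabs (gibbs_exp N alpha beta S (fun sigma => f (mag1 N S sigma) (mag2 N S sigma))
                    - f 0 0) < e.
Proof.
  intros Hconc Hmax f Hf [B HB] e He.
  destruct (Hf 0 0 (e / 2) ltac:(lra)) as [dl [Hdl Hcf]].
  assert (HB0 : 0 <= B) by (eapply Rle_trans; [apply Rabs_pos| apply (HB 0 0)]).
  destruct (Hconc dl Hdl) as [c [Hc [N0 HN0]]].
  destruct (INR_unbounded (4 * B / (e * c))) as [N1 HN1].
  exists (N0 + N1)%nat. intros N S HN Hv.
  assert (Hp := HN0 N S ltac:(lia) Hv).
  assert (HNN1 : INR N1 <= INR N) by (apply le_INR; lia).
  set (w := weight N alpha beta S) in *.
  set (Z := partition_fn N alpha beta S) in *.
  assert (HZ : 0 < Z) by apply Z_pos.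
  set (F := fun sigma => f (mag1 N S sigma) (mag2 N S sigma)).
  set (m := fun sigma => match excluded_middle_informative
        (~ in_nbhd_M alpha beta dl (mag1 N S sigma) (mag2 N S sigma)) with
        | left _ => w sigma | right _ => 0 end).
  set (f00 := f 0 0).
  assert (Hw : forall sigma, 0 < w sigma) by (intros; apply exp_pos).
  assert (Hdiff : gibbs_exp N alpha beta S F - f00 = sumR (cube N) (fun sigma => (F sigma - f00) * w sigma) / Z).
  { unfold gibbs_exp. fold w Z.
    rewrite (sumR_ext _ (fun sigma => (F sigma - f00) * w sigma) (fun sigma => F sigma * w sigma + (- f00) * w sigma)) by (intros; ring).
    rewrite sumR_plus, sumR_scal. unfold Z, partition_fn. fold w. assert (HZ' : sumR (cube N) w <> 0) by (change (sumR (cube N) w) with Z; lra). field. exact HZ'. }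
  assert (Hpt : forall sigma, Rabs (F sigma - f00) * w sigma <= e / 2 * w sigma + 2 * B * m sigma).
  { intros sigma. assert (Hws := Hw sigma). unfold m.
    destruct (excluded_middle_informative _) as [p|p].
    - assert (Rabs (F sigma - f00) <= 2 * B).
      { unfold Rminus. eapply Rle_trans; [apply Rabs_triang|]. rewrite Rabs_Ropp. unfold F, f00.
        assert (H1 := HB (mag1 N S sigma) (mag2 N S sigma)). assert (H2 := HB 0 0). lra. }
      nra.
    - apply NNPP in p. destruct p as [x1 [x2 [Hx Hd]]]. apply Hmax in Hx. destruct Hx as [-> ->].
      assert (M1 := abs_le_sqrt (mag1 N S sigma - 0) (mag2 N S sigma - 0)).
      assert (M2 := abs_le_sqrt (mag2 N S sigma - 0) (mag1 N S sigma - 0)).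
      rewrite Rplus_comm in M2.
      assert (Rabs (F sigma - f00) < e / 2) by (apply Hcf; lra). nra. }
  rewrite Hdiff. unfold Rdiv. rewrite Rabs_mult, (Rabs_right (/ Z)) by (apply Rle_ge, Rlt_le, Rinv_0_lt_compat; auto).
  assert (Hsum : Rabs (sumR (cube N) (fun sigma => (F sigma - f00) * w sigma)) <= e / 2 * Z + 2 * B * sumR (cube N) m).
  { eapply Rle_trans; [apply sumR_abs|].
    eapply Rle_trans; [apply (sumR_le _ _ (fun sigma => e / 2 * w sigma + 2 * B * m sigma))|].
    - intros sigma _. rewrite Rabs_mult, (Rabs_right (w sigma)) by (apply Rle_ge, Rlt_le; auto). apply Hpt.
    - rewrite sumR_plus, !sumR_scal. unfold Z, partition_fn. fold w. lra. }
  assert (Hprob : sumR (cube N) m * / Z <= exp (- c * INR N)) by exact Hp.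
  assert (Hexp := exp_neg_bound c (INR N) ltac:(apply Rmult_le_pos; [lra|apply pos_INR])).
  assert (HcN : 4 * B / e < c * INR N).
  { apply (Rmult_lt_reg_l (/ c)). apply Rinv_0_lt_compat; auto.
    replace (/ c * (c * INR N)) with (INR N) by (field; lra).
    replace (/ c * (4 * B / e)) with (4 * B / (e * c)) by (field; lra). lra. }
  assert (Hfin : 2 * B * exp (- c * INR N) < e / 2).
  { assert (H1 : 0 < 1 + c * INR N) by (assert (0 <= c * INR N) by (apply Rmult_le_pos; [lra|apply pos_INR]); lra).
    apply Rle_lt_trans with (2 * B * / (1 + c * INR N)). apply Rmult_le_compat_l; lra.
    apply (Rmult_lt_reg_r (1 + c * INR N)); auto. rewrite Rmult_assoc, Rinv_l, Rmult_1_r by lra.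
    assert (4 * B < e * (c * INR N)).
    { apply (Rmult_lt_reg_l (/ e)). apply Rinv_0_lt_compat; auto.
      replace (/ e * (e * (c * INR N))) with (c * INR N) by (field; lra).
      replace (/ e * (4 * B)) with (4 * B / e) by (field; lra). lra. }
    nra. }
  assert (HiZ : 0 < / Z) by (apply Rinv_0_lt_compat; auto).
  apply Rle_lt_trans with ((e / 2 * Z + 2 * B * sumR (cube N) m) * / Z).
  { apply Rmult_le_compat_r; lra. }
  replace ((e / 2 * Z + 2 * B * sumR (cube N) m) * / Z) with (e / 2 + 2 * B * (sumR (cube N) m * / Z)) by (field; lra).
  assert (2 * B * (sumR (cube N) m * / Z) <= 2 * B * exp (- c * INR N)) by (apply Rmult_le_compat_l; lra).
  lra.
Qed.

Theorem mainTheorem2 (alpha beta : R) (hbeta : 0 < beta)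
  (halpha : 0 <= alpha) (hab : alpha <= beta) :
  (forall eps, 0 < eps -> exists c, 0 < c /\ exists N0 : nat,
     forall (N : nat) (S : nat -> bool), (N0 <= N)%nat -> valid_block N S ->
       gibbs_prob N alpha beta S
         (fun sigma => ~ in_nbhd_M alpha beta eps (mag1 N S sigma) (mag2 N S sigma))
       <= exp (- c * INR N))
  /\
  (alpha + beta <= 2 ->
     (0 < alpha -> forall x1 x2, -1 < x1 < 1 -> -1 < x2 < 1 ->
        / 2 * beta * x1 + / 2 * alpha * x2 = artanh x1 ->
        / 2 * beta * x2 + / 2 * alpha * x1 = artanh x2 ->
        x1 = 0 /\ x2 = 0)
     /\ (forall x1 x2, is_global_max alpha beta x1 x2 <-> (x1 = 0 /\ x2 = 0))
     /\ (forall f : R -> R -> R, continuous2 f -> bounded2 f ->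
          forall e, 0 < e -> exists N0 : nat,
            forall (N : nat) (S : nat -> bool), (N0 <= N)%nat -> valid_block N S ->
              Rabs (gibbs_exp N alpha beta S (fun sigma => f (mag1 N S sigma) (mag2 N S sigma))
                    - f 0 0) < e))
  /\
  (2 < alpha + beta -> 0 < alpha ->
     exists mstar, 0 < mstar /\ tanh ((alpha + beta) / 2 * mstar) = mstar /\
       (forall z, 0 < z -> tanh ((alpha + beta) / 2 * z) = z -> z = mstar) /\
       (forall x1 x2, is_global_max alpha beta x1 x2 <->
          ((x1 = mstar /\ x2 = mstar) \/ (x1 = - mstar /\ x2 = - mstar)))).
Proof.
  assert (HK : 0 < (alpha + beta) / 2) by lra.
  assert (Hconc : forall eps, 0 < eps -> exists c, 0 < c /\ exists N0 : nat,
     forall (N : nat) (S : nat -> bool), (N0 <= N)%nat -> valid_block N S ->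
       gibbs_prob N alpha beta S
         (fun sigma => ~ in_nbhd_M alpha beta eps (mag1 N S sigma) (mag2 N S sigma))
       <= exp (- c * INR N)).
  { destruct (gapdata_exists alpha beta HK) as [Gm [Am [s HG]]].
    apply (concentration_abs alpha beta Gm Am s halpha HG). }
  split; [exact Hconc|split].
  - intros Hs.
    assert (HG := gap_small ((alpha + beta) / 2) ltac:(lra)).
    assert (Hmax : forall x1 x2, is_global_max alpha beta x1 x2 <-> (x1 = 0 /\ x2 = 0)).
    { intros x1 x2. rewrite (max_char alpha beta 0 1 [0] halpha HG). split.
      - intros [[H1|[]] [[H2|[]] _]]. split; auto.
      - intros [-> ->]. split; [left; auto|split; [left; auto|auto]]. }
    split; [|split].
    + intros Ha x1 x2 Hx1 Hx2 E1 E2. apply (crit_zero alpha beta); auto.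
    + exact Hmax.
    + apply weak_conv; auto.
  - intros Hs Ha.
    destruct (rr_root ((alpha + beta) / 2) ltac:(lra)) as [z [Hz Hr]].
    assert (HG := gap_big ((alpha + beta) / 2) z Hz Hr).
    assert (Haz : artanh z = (alpha + beta) / 2 * z) by (unfold rr in Hr; rewrite <- Hr; field; lra).
    exists z. split; [lra|split; [|split]].
    + apply tanh_fix_iff; [lra|]. split; [lra|auto].
    + intros z' Hz' Ht. apply tanh_fix_iff in Ht; auto. destruct Ht as [Hz1 Ha'].
      assert (Hr' : rr z' = (alpha + beta) / 2) by (unfold rr; rewrite Ha'; field; lra).
      destruct (Rtotal_order z' z) as [h|[h|h]]; auto.
      * assert (rr z' < rr z) by (apply rr_incr; lra). lra.
      * assert (rr z < rr z') by (apply rr_incr; lra). lra.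
    + intros x1 x2. rewrite (max_char alpha beta _ z _ halpha HG). split.
      * intros [H1 [H2 H3]]. specialize (H3 Ha). subst x2.
        destruct H1 as [<-|[<-|[]]]; [left|right]; auto.
      * intros [[-> ->]|[-> ->]]; (split; [|split]); simpl; auto.
Qed.
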